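(* Let $S_2$ be a strongly $E^*$-unitary inverse semigroup with pure grading $\varphi:S_2^\times\to G$, and let $S_1\subseteq S_2$ be an inverse subsemigroup containing $0$ (an injective homomorphism preserving $0$ and all products), given the restricted pure grading. Suppose the induced inclusion of idempotent semilattices $E_1\subseteq E_2$ preserves finite covers. Then there is an induced injective morphism of partial actions $(\mathcal T_c(E_1),\Phi_1)\to(\mathcal T_c(E_2),\Phi_2)$, and consequently, for every commutative unital ring $R$, an injective $G$-graded $R$-algebra homomorphism $L_R(S_1,\varphi)\hookrightarrow L_R(S_2,\varphi)$ given by $x\delta_g\mapsto x\delta_g$ for $g\in G$ and $x\in E_{1,g}$.
   Context: An inverse semigroup with zero $S$ has unique inverses $s^*$; $E$ denotes its idempotents (a meet semilattice with $x\wedge y=xy$, least element $0$), $S^\times=S\setminus\{0\}$, $E^\times=E\setminus\{0\}$. A pure grading is a map $\varphi:S^\times\to G$ to a group with $\varphi(ab)=\varphi(a)\varphi(b)$ whenever $ab\ne0$ and $\varphi^{-1}(1_G)=E^\times$ (it restricts to a pure grading of any inverse subsemigroup containing $0$). For $S_i$ write $E_i$ for its idempotents, and $E_{i,g}=\{x\in E_i: x\le ss^*$ for some $s\in S_i$ with $\varphi(s)=g\}$ (or $\{0\}$ if no such $s$); $\phi_{i,g}:E_{i,g^{-1}}\to E_{i,g}$, $x\mapsto sxs^*$ ($s\in S_i$, $\varphi(s)=g$, $x\le s^*s$). For a meet semilattice $P$ with $0$: a filter is a subset $F$, $\emptyset\ne F\ne P$, closed upwards and under meets; $F(P)$ has topology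 generated by $\{F:x\in F\}$; tight filters $T(P)$ are the closure of the ultrafilters; $V^P_{(x:x_1,\dots,x_n)}=\{\xi\in T(P):x\in\xi, x_i\notin\xi\}$, $V_x=V_{(x:)}$; $\mathcal T_c(P)$ is the generalized Boolean algebra of compact open subsets of $T(P)$. A finite cover of $x\in P$ is a finite set of elements $\le x$ such that every $0\ne y\le x$ meets one of them nontrivially; $P_1\subseteq P_2$ preserves finite covers if every finite cover in $P_1$ of $x\in P_1$ is a finite cover of $x$ in $P_2$; then $U\mapsto\{\xi\in T(P_2):\xi\cap P_1\ne\emptyset,\ \xi\cap P_1\in U\}$ is an injective generalized Boolean algebra morphism $\mathcal T_c(P_1)\to\mathcal T_c(P_2)$ sending $V^{P_1}_{(x:x_1,\dots)}\mapsto V^{P_2}_{(x:x_1,\dots)}$. $\mathcal T_c(E_{i,g})$ is identified in this way with an ideal of $\mathcal T_c(E_i)$, and $\hat\phi_{i,g}:\mathcal T_c(E_{i,g^{-1}})\to\mathcal T_c(E_{i,g})$ is the isomorphism induced by $\phi_{i,g}$; $\Phi_i=(\{\mathcal T_c(E_{i,g})\},\{\hat\phi_{i,g}\})$ is a partial action of $G$ on $\mathcal T_c(E_i)$. A morphism of partial actions $(\mathcal B_1,\{\mathcal I_{1,t}\},\{\psi_{1,t}\})\to(\mathcal B_2,\{\mathcal I_{2,t}\},\{\psi_{2,t}\})$ is a generalized Boolean algebra morphism $f$ with $f(\mathcal I_{1,t})\subseteq\mathcal I_{2,t}$ and $f\psi_{1,t}=\psi_{2,t}f$ on $\mathcal I_{1,t^{-1}}$.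 For a partial action $\Phi=(\{\mathcal I_t\},\{\psi_t\})$ on $\mathcal B$ and commutative unital ring $R$: $\mathrm{Lc}(R,\mathcal B)$ is the $R$-algebra of functions $f:R\setminus\{0\}\to\mathcal B$ with pairwise disjoint values, almost all $0$, viewed as $\sum_r r1_{f(r)}$; $\mathrm{Lc}(R,\mathcal B)\rtimes_\Phi G$ consists of finite sums $\sum_t f_t\delta_t$, $f_t\in\mathrm{Lc}(R,\mathcal I_t)$, with $(a\delta_s)(b\delta_t)=\tilde\psi_s(\tilde\psi_{s^{-1}}(a)b)\delta_{st}$, $\tilde\psi_t(f)=\psi_t\circ f$, graded by $a\delta_g\mapsto g$. $L_R(S_i,\varphi):=\mathrm{Lc}(R,\mathcal T_c(E_i))\rtimes_{\Phi_i}G$, and $x\delta_g:=1_{V_x}\delta_g$ for $x\in E_{i,g}$. *)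

(* Defs.v *)
From HB Require Import structures.
From mathcomp Require Import all_boot all_order all_algebra.
From mathcomp Require Import boolp classical_sets.
Set Implicit Arguments. Unset Strict Implicit. Unset Printing Implicit Defensive.
Local Open Scope classical_set_scope.

(* list membership in Prop (no decidable equality needed) *)
Fixpoint lin {T : Type} (x : T) (l : seq T) : Prop :=
  if l is y :: l' then y = x \/ lin x l' else False.

Record Grp := {
  gcar :> Type;
  gmul : gcar -> gcar -> gcar;
  ginv : gcar -> gcar;
  gone : gcar;
  gmulA : forall a b c, gmul a (gmul b c) = gmul (gmul a b) c;
  gmul1l : forall a, gmul gone a = a;
  gmulVl : forall a, gmul (ginv a) a = gone }.
Arguments gmul {g}. Arguments ginv {g}. Arguments gone {g}.

Record InvSemigroup := {
  scar :> Type;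
  smul : scar -> scar -> scar;
  szero : scar;
  sinv : scar -> scar;
  smulA : forall a b c, smul a (smul b c) = smul (smul a b) c;
  smul0l : forall a, smul szero a = szero;
  smul0r : forall a, smul a szero = szero;
  sinv_l : forall s, smul (smul s (sinv s)) s = s;
  sinv_r : forall s, smul (smul (sinv s) s) (sinv s) = sinv s;
  sinv_uniq : forall s t, smul (smul s t) s = s -> smul (smul t s) t = t -> t = sinv s }.
Arguments smul {i}. Arguments szero {i}. Arguments sinv {i}.

Section Defs.
Variable S : InvSemigroup.

Definition idem (x : S) := smul x x = x.
Definition Eset : set S := [set x | idem x].
Definition leS (x y : S) := smul x y = x.

(* A meet semilattice with 0 is given as a subset P of idempotents of S. *)
Definition is_filter (P F : set S) :=
  [/\ F `<=` P, F !=set0, F <> P,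
      (forall x y, F x -> P y -> leS x y -> F y) &
      (forall x y, F x -> F y -> F (smul x y))].

Definition is_ultrafilter (P F : set S) :=
  is_filter P F /\ (forall F', is_filter P F' -> F `<=` F' -> F' = F).

(* basic open sets of F(P): x_i in F for xs, y_j not in F for ys *)
Definition basic_nbhd (xs ys : seq S) (F : set S) :=
  (forall x, lin x xs -> F x) /\ (forall y, lin y ys -> ~ F y).

Definition in_P (P : set S) (l : seq S) := forall x, lin x l -> P x.

(* tight filters: closure of the ultrafilters in F(P) *)
Definition Tight (P : set S) (F : set S) :=
  is_filter P F /\
  forall xs ys, in_P P xs -> in_P P ys -> basic_nbhd xs ys F ->
    exists U, is_ultrafilter P U /\ basic_nbhd xs ys U.

(* open and compact subsets of T(P) (subspace topology) *)
Definition openT (P : set S) (U : set (set S)) :=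
  U `<=` Tight P /\
  forall xi, U xi -> exists xs ys, [/\ in_P P xs, in_P P ys, basic_nbhd xs ys xi &
    forall eta, Tight P eta -> basic_nbhd xs ys eta -> U eta].

Definition compactT (P : set S) (U : set (set S)) :=
  forall C : set (set (set S)), (forall O, C O -> openT P O) ->
    (forall xi, U xi -> exists O, C O /\ O xi) ->
    exists l : seq (set (set S)), (forall O, lin O l -> C O) /\
      (forall xi, U xi -> exists O, lin O l /\ O xi).

Definition Tc (P : set S) : set (set (set S)) := [set U | openT P U /\ compactT P U].

Definition Vset (P : set S) (x : S) (ys : seq S) : set (set S) :=
  [set xi | Tight P xi /\ xi x /\ forall y, lin y ys -> ~ xi y].

Definition fcover (P : set S) (x : S) (C : seq S) :=
  (forall c, lin c C -> P c /\ leS c x) /\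
  (forall y, P y -> y <> szero -> leS y x -> exists c, lin c C /\ smul y c <> szero).

Definition pure_grading (G : Grp) (phi : S -> G) :=
  (forall a b, smul a b <> szero -> phi (smul a b) = gmul (phi a) (phi b)) /\
  (forall s, s <> szero -> (phi s = gone <-> idem s)).

Definition Eg (G : Grp) (phi : S -> G) (g : G) : set S :=
  [set x | idem x /\ (x = szero \/
     exists s, [/\ s <> szero, phi s = g & leS x (smul s (sinv s))])].

Definition phimg (G : Grp) (phi : S -> G) (g : G) (eta : set S) : set S :=
  [set y | exists x s, [/\ eta x, s <> szero, phi s = g, leS x (smul (sinv s) s) &
                          y = smul (smul s x) (sinv s)]].
End Defs.

Definition preserves_fcovers (S1 S2 : InvSemigroup) (P1 : set S1) (P2 : set S2)
  (iota : S1 -> S2) :=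
  forall x C, P1 x -> fcover P1 x C -> fcover P2 (iota x) (map iota C).

Definition Tmap (S1 S2 : InvSemigroup) (P1 : set S1) (P2 : set S2) (iota : S1 -> S2)
  (U : set (set S1)) : set (set S2) :=
  [set xi | [/\ Tight P2 xi, (exists x, P1 x /\ xi (iota x)) &
                U [set x | P1 x /\ xi (iota x)]]].

Section PartialAction.
Variables (G : Grp) (S : InvSemigroup) (phi : S -> G).

(* the ideal I_g = T_c(E_g), identified inside T_c(E) *)
Definition Iid (g : G) : set (set (set S)) :=
  [set U | exists U', Tc (Eg phi g) U' /\ U = Tmap (Eg phi g) (@Eset S) id U'].

Definition restr (Q : set S) (U : set (set S)) : set (set S) :=
  [set eta | exists xi, U xi /\ eta = xi `&` Q].

(* hat phi_g : I_{g^-1} -> I_g, transported through the identifications *)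
Definition psi (g : G) (U : set (set S)) : set (set S) :=
  Tmap (Eg phi g) (@Eset S) id
    [set phimg phi g eta | eta in restr (Eg phi (ginv g)) U].

Variable R : comPzRingType.
Local Open Scope ring_scope.

(* an element sum_r r 1_{f(r)} of LcR(R,B) is encoded by the function
   xi |-> r if xi \in f(r), 0 otherwise *)
Definition LcR (B : set (set (set S))) (h : set S -> R) :=
  (exists l : seq R, forall xi, h xi \in l) /\
  (forall r : R, r != 0 -> B (h @^-1` [set r])).

Definition psit (g : G) (h : set S -> R) : set S -> R :=
  fun eta => xget 0 [set r | r != 0 /\ psi g (h @^-1` [set r]) eta].

(* elements of LcR(R,T_c(E)) x_Phi G : finitely supported families *)
Definition LR (a : G -> set S -> R) :=
  (exists l : seq G, forall g, ~ lin g l -> a g = (fun=> 0)) /\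
  (forall g, LcR (Iid g) (a g)).

Definition homog (g : G) (c : set S -> R) : G -> set S -> R :=
  fun t => if `[< t = g >] then c else (fun=> 0).

Definition LRadd (a b : G -> set S -> R) : G -> set S -> R := fun g xi => a g xi + b g xi.
Definition LRscale (r : R) (a : G -> set S -> R) : G -> set S -> R := fun g xi => r * a g xi.

(* (a delta_s)(b delta_t) = psit_s(psit_{s^-1}(a) b) delta_{st} *)
Definition homprod (s : G) (a b : set S -> R) : set S -> R :=
  psit s (fun xi => psit (ginv s) a xi * b xi).

Definition indic (U : set (set S)) : set S -> R := fun xi => if `[< U xi >] then 1 else 0.

(* x delta_g := 1_{V_x} delta_g *)
Definition xdelta (g : G) (x : S) : G -> set S -> R := homog g (indic (Vset (@Eset S) x [::])).
End PartialAction.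

(* Main.v *)
Require Import Defs.
From HB Require Import structures.
From mathcomp Require Import all_boot all_order all_algebra.
From mathcomp Require Import boolp classical_sets.
Set Implicit Arguments. Unset Strict Implicit. Unset Printing Implicit Defensive.
Local Open Scope classical_set_scope.

Local Notation "a ⊙ b" := (smul a b) (at level 40, left associativity).

Section Semi.
Variable S : InvSemigroup.
Implicit Types s t e f x y : S.

Lemma sinvK s : sinv (sinv s) = s.
Proof. by symmetry; apply: sinv_uniq; [apply: sinv_r | apply: sinv_l]. Qed.

Lemma idem_sinv e : idem e -> sinv e = e.
Proof. by move=> He; symmetry; apply: sinv_uniq; rewrite He He. Qed.

Lemma idem_r a f : idem f -> a ⊙ f ⊙ f = a ⊙ f.
Proof. by move=> Hf; rewrite -smulA Hf. Qed.

Lemma ssinv_idem s : idem (s ⊙ sinv s).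
Proof. by rewrite /idem smulA sinv_l. Qed.

Lemma sinvs_idem s : idem (sinv s ⊙ s).
Proof. by rewrite /idem smulA sinv_r. Qed.

Lemma idem_mul e f : idem e -> idem f -> idem (e ⊙ f).
Proof.
move=> He Hf; set x := sinv (e ⊙ f).
have Hx : f ⊙ x ⊙ e = x.
  apply: sinv_uniq.
  - have H := sinv_l (e ⊙ f); rewrite !smulA in H.
    by rewrite !smulA !idem_r //.
  - have H := sinv_r (e ⊙ f); rewrite -/x !smulA in H.
    have -> : f ⊙ x ⊙ e ⊙ (e ⊙ f) ⊙ (f ⊙ x ⊙ e) = f ⊙ (x ⊙ e ⊙ f ⊙ x) ⊙ e.
      by rewrite !smulA !idem_r.
    by rewrite H.
have Hxx : idem x.
  have H := sinv_r (e ⊙ f); rewrite -/x !smulA in H.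
  rewrite /idem -{1 2}Hx.
  have -> : f ⊙ x ⊙ e ⊙ (f ⊙ x ⊙ e) = f ⊙ (x ⊙ e ⊙ f ⊙ x) ⊙ e by rewrite !smulA.
  by rewrite H Hx.
have : sinv x = x by apply: idem_sinv.
by rewrite /x sinvK => ->.
Qed.

Lemma idem_comm e f : idem e -> idem f -> e ⊙ f = f ⊙ e.
Proof.
move=> He Hf; have Hef := idem_mul He Hf; have Hfe := idem_mul Hf He.
rewrite -(idem_sinv Hef); symmetry; apply: sinv_uniq.
- have -> : e ⊙ f ⊙ (f ⊙ e) ⊙ (e ⊙ f) = (e ⊙ f) ⊙ (e ⊙ f) by rewrite !smulA !idem_r.
  exact: Hef.
- have -> : f ⊙ e ⊙ (e ⊙ f) ⊙ (f ⊙ e) = (f ⊙ e) ⊙ (f ⊙ e) by rewrite !smulA !idem_r.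
  exact: Hfe.
Qed.

Lemma sinv_mul s t : sinv (s ⊙ t) = sinv t ⊙ sinv s.
Proof.
symmetry; apply: sinv_uniq.
- have -> : s ⊙ t ⊙ (sinv t ⊙ sinv s) ⊙ (s ⊙ t) =
     s ⊙ ((t ⊙ sinv t) ⊙ (sinv s ⊙ s)) ⊙ t by rewrite !smulA.
  rewrite (idem_comm (ssinv_idem t) (sinvs_idem s)) !smulA sinv_l.
  by rewrite -(smulA s t) -(smulA s) sinv_l.
- have -> : sinv t ⊙ sinv s ⊙ (s ⊙ t) ⊙ (sinv t ⊙ sinv s) =
     sinv t ⊙ ((sinv s ⊙ s) ⊙ (t ⊙ sinv t)) ⊙ sinv s by rewrite !smulA.
  rewrite -(idem_comm (ssinv_idem t) (sinvs_idem s)) !smulA sinv_r.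
  by rewrite -(smulA (sinv t) (sinv s)) -(smulA (sinv t)) sinv_r.
Qed.

Lemma idem0 : idem (szero : S).
Proof. by rewrite /idem smul0l. Qed.

Lemma sinv0 : sinv (szero : S) = szero.
Proof. exact: idem_sinv idem0. Qed.

End Semi.


Section Order.
Variable S : InvSemigroup.
Implicit Types a b c d s t e f x y z : S.

Lemma leS_refl x : idem x -> leS x x.
Proof. by []. Qed.

Lemma leS_trans x y z : leS x y -> leS y z -> leS x z.
Proof. by rewrite /leS => Hxy Hyz; rewrite -Hxy -smulA Hyz. Qed.

Lemma le0S y : leS (szero : S) y.
Proof. by rewrite /leS smul0l. Qed.

Lemma leS0 x : leS x szero -> x = szero.
Proof. by rewrite /leS smul0r => <-. Qed.

Lemma leS_mulr x y : idem y -> leS (x ⊙ y) y.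
Proof. by move=> Hy; rewrite /leS -smulA Hy. Qed.

Lemma leS_mull x y : idem x -> idem y -> leS (x ⊙ y) x.
Proof. by move=> Hx Hy; rewrite /leS (idem_comm Hx Hy) -smulA Hx. Qed.

Lemma leS_meet z x y : leS z x -> leS z y -> leS z (x ⊙ y).
Proof. by rewrite /leS => Hx Hy; rewrite smulA Hx Hy. Qed.

Lemma leS_mul2 a b c d : idem b -> idem c -> leS a b -> leS c d -> leS (a ⊙ c) (b ⊙ d).
Proof.
move=> Hb Hc; rewrite /leS => Hab Hcd.
have -> : a ⊙ c ⊙ (b ⊙ d) = a ⊙ (c ⊙ b) ⊙ d by rewrite !smulA.
by rewrite (idem_comm Hc Hb) !smulA Hab -smulA Hcd.
Qed.

End Order.

Section Filt.
Variable S : InvSemigroup.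
Variable P : set S.
Hypothesis HPi : forall x, P x -> idem x.
Hypothesis HP0 : P szero.
Hypothesis HPm : forall x y, P x -> P y -> P (x ⊙ y).
Implicit Types x y z w : S.

Lemma filter_sub F : is_filter P F -> F `<=` P.
Proof. by case. Qed.

Lemma filter_up F x y : is_filter P F -> F x -> P y -> leS x y -> F y.
Proof. by case=> _ _ _ H _; apply: H. Qed.

Lemma filter_meet F x y : is_filter P F -> F x -> F y -> F (x ⊙ y).
Proof. by case=> _ _ _ _ H; apply: H. Qed.

Lemma filter_no0 F : is_filter P F -> ~ F szero.
Proof.
case=> FP _ FnP Fup _ F0; apply: FnP; apply/seteqP; split=> // y Py.
exact: Fup F0 Py (le0S y).
Qed.

Lemma filter_ne0 F x : is_filter P F -> F x -> x <> szero.
Proof. by move=> HF Fx x0; apply: (filter_no0 HF); rewrite -x0. Qed.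

Lemma mk_filter F x0 : F `<=` P -> F x0 -> ~ F szero ->
  (forall x y, F x -> P y -> leS x y -> F y) ->
  (forall x y, F x -> F y -> F (x ⊙ y)) -> is_filter P F.
Proof.
move=> FP Fx0 F0 Fup Fm; split=> //; first by exists x0.
by move=> FeP; apply: F0; rewrite FeP.
Qed.

Lemma uf_filter W : is_ultrafilter P W -> is_filter P W.
Proof. by case. Qed.

Lemma uf_sep W y : is_ultrafilter P W -> P y -> ~ W y ->
  exists w, W w /\ w ⊙ y = szero.
Proof.
move=> [HW Hmax] Py nWy; apply: contra_notP nWy => Hn.
have Hn' : forall w, W w -> w ⊙ y <> szero.
  by move=> w Ww e; apply: Hn; exists w.
have [w0 Ww0] : W !=set0 by case: HW.
have WP := filter_sub HW.
pose F := [set z | P z /\ exists w, W w /\ leS (w ⊙ y) z].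
have HF : is_filter P F.
  apply: (@mk_filter F (w0 ⊙ y)).
  - by move=> z [].
  - by split; [apply: HPm => //; apply: WP | exists w0; split=> //; apply: HPi; apply: HPm=>//; apply: WP].
  - by move=> [_ [w [Ww /leS0 e]]]; apply: (Hn' w).
  - move=> a b [Pa [w [Ww Ha]]] Pb ab; split=> //; exists w; split=> //.
    exact: leS_trans ab.
  - move=> a b [Pa [w1 [Ww1 H1]]] [Pb [w2 [Ww2 H2]]]; split; first exact: HPm.
    exists (w1 ⊙ w2); split; first exact: filter_meet.
    have Pw1 := WP _ Ww1; have Pw2 := WP _ Ww2.
    apply: leS_meet.
    + apply: leS_trans H1; apply: leS_mul2.
      * exact: HPi Pw1.
      * exact: HPi Py.
      * exact: leS_mull (HPi Pw1) (HPi Pw2).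
      * exact: HPi Py.
    + apply: leS_trans H2; rewrite -smulA; apply: leS_mulr.
      exact: HPi (HPm Pw2 Py).
have WF : W `<=` F.
  move=> w Ww; split; first exact: WP.
  exists w; split=> //; exact: leS_mull (HPi (WP _ Ww)) (HPi Py).
have := Hmax _ HF WF => FW.
rewrite -FW; split=> //; exists w0; split=> //; exact: leS_mulr (HPi Py).
Qed.


Lemma uf_cover_aux W x C : is_ultrafilter P W -> W x ->
  (forall c, lin c C -> P c /\ ~ W c) ->
  exists w, [/\ W w, leS w x & forall c, lin c C -> w ⊙ c = szero].
Proof.
move=> HU Wx; have HW := uf_filter HU; have WP := filter_sub HW.
elim: C => [|c C IH] HC.
  by exists x; split=> //; exact: HPi (WP _ Wx).
have [w [Ww wx Hw]] : exists w, [/\ W w, leS w x & forall c, lin c C -> w ⊙ c = szero].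
  by apply: IH => c' Hc'; apply: HC; right.
have [Pc nWc] := HC c (or_introl erefl).
have [v [Wv vc]] := uf_sep HU Pc nWc.
exists (w ⊙ v); split.
- exact: filter_meet.
- apply: leS_trans wx; exact: leS_mull (HPi (WP _ Ww)) (HPi (WP _ Wv)).
- move=> c' [<-|Hc']; first by rewrite -smulA vc smul0r.
  have Pc' := (HC c' (or_intror Hc')).1.
  rewrite -smulA (idem_comm (HPi (WP _ Wv)) (HPi Pc')) smulA (Hw _ Hc') smul0l //.
Qed.

Lemma uf_cover W x C : is_ultrafilter P W -> W x -> fcover P x C ->
  exists c, lin c C /\ W c.
Proof.
move=> HU Wx [HC1 HC2]; case: (pselect (exists c, lin c C /\ W c)) => // Hn; exfalso.
have HW := uf_filter HU; have WP := filter_sub HW.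
have [w [Ww wx Hw]] : exists w, [/\ W w, leS w x & forall c, lin c C -> w ⊙ c = szero].
  apply: uf_cover_aux => // c Hc; split; first exact: (HC1 c Hc).1.
  by move=> Wc; apply: Hn; exists c.
have [c [Hc wc]] := HC2 w (WP _ Ww) (filter_ne0 HW Ww) wx.
by apply: wc; apply: Hw.
Qed.

Lemma uf_tight W : is_ultrafilter P W -> Tight P W.
Proof. by move=> HU; split; [exact: uf_filter | move=> xs ys _ _ Hb; exists W]. Qed.

Lemma uf_ext F : is_filter P F -> exists U, is_ultrafilter P U /\ F `<=` U.
Proof.
move=> HF.
pose Q := [set G : set S | G = set0 \/ (is_filter P G /\ F `<=` G)].
have [A [QA Amax]] : exists A, Q A /\ forall B, A `<` B -> ~ Q B.
  apply: Zorn_bigcup => F0 F0Q F0tot.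
  have [[G0 [FG0 nG0]]|nG] := pselect (exists G, F0 G /\ G !=set0); last first.
    left; apply/seteqP; split=> // x [G FG Gx]; apply: nG; exists G; split=> //.
    by exists x.
  have good : forall G, F0 G -> G !=set0 -> is_filter P G /\ F `<=` G.
    move=> G FG [x Gx]; case: (F0Q G FG) => // G0e; by rewrite G0e in Gx.
  have good' : forall G x, F0 G -> G x -> is_filter P G.
    by move=> G x FG Gx; case: (good G FG); first by exists x.
  right; split; last first.
    by apply: subset_trans (good G0 FG0 nG0).2 _; apply: bigcup_sup.
  have [x0 Gx0] := nG0.
  apply: (@mk_filter _ x0).
  - by move=> x [G FG Gx]; apply: filter_sub (good' G x FG Gx) _ Gx.
  - by exists G0.
  - by move=> [G FG G0']; apply: (filter_no0 (good' G _ FG G0')).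
  - move=> x y [G FG Gx] Py xy; exists G => //; exact: filter_up (good' G x FG Gx) Gx Py xy.
  - move=> x y [G1 FG1 Gx] [G2 FG2 Gy].
    case: (F0tot G1 G2 FG1 FG2) => H12.
    + exists G2 => //; apply: filter_meet (good' G2 y FG2 Gy) (H12 _ Gx) Gy.
    + exists G1 => //; apply: filter_meet (good' G1 x FG1 Gx) Gx (H12 _ Gy).
have [A0|[HA FA]] := QA.
  exfalso; apply: (Amax F); last by rewrite /Q /mkset; right; split.
  rewrite A0; split=> //; case: HF => _ [x Fx] _ _ _ H; by have := H x Fx.
exists A; split=> //; split=> // F' HF' AF'.
apply/seteqP; split=> //; case: (pselect (F' `<=` A)) => // nF'A; exfalso.
apply: (Amax F'); first by split.
rewrite /Q /mkset; right; split=> //; exact: subset_trans AF'.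
Qed.

Lemma principal_filter z : P z -> z <> szero -> is_filter P [set y | P y /\ leS z y].
Proof.
move=> Pz nz; apply: (@mk_filter _ z).
- by move=> y [].
- by split=> //; exact: HPi.
- by move=> [_ /leS0].
- by move=> x y [Px zx] Py xy; split=> //; exact: leS_trans xy.
- move=> x y [Px zx] [Py zy]; split; [exact: HPm | exact: leS_meet].
Qed.

Lemma uf_exists z : P z -> z <> szero -> exists U, is_ultrafilter P U /\ U z.
Proof.
move=> Pz nz; have [U [HU sU]] := uf_ext (principal_filter Pz nz).
by exists U; split=> //; apply: sU; split=> //; exact: HPi.
Qed.

End Filt.

Section Meetl.
Variable S : InvSemigroup.
Variable P : set S.
Hypothesis HPi : forall x, P x -> idem x.

Lemma meetl F (x0 : S) xs : is_filter P F -> F x0 -> (forall a, lin a xs -> F a) ->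
  [/\ F (foldr smul x0 xs), leS (foldr smul x0 xs) x0 &
     forall a, lin a xs -> leS (foldr smul x0 xs) a].
Proof.
move=> HF Fx0; have FP := filter_sub HF.
elim: xs => [|a xs IH] Hxs /=.
  split=> //; exact: HPi (FP _ Fx0).
have [H1 H2 H3] := IH (fun b Hb => Hxs b (or_intror Hb)).
have Fa := Hxs a (or_introl erefl).
have Hle : leS (a ⊙ foldr smul x0 xs) (foldr smul x0 xs) by apply: leS_mulr; exact: HPi (FP _ H1).
split; first exact: filter_meet HF Fa H1.
- exact: leS_trans H2.
- move=> b [<-|Hb]; first by apply: leS_mull; apply: HPi; apply: FP.
  exact: leS_trans (H3 b Hb).
Qed.

End Meetl.


Lemma lin_cat T (x : T) l1 l2 : lin x (l1 ++ l2) <-> lin x l1 \/ lin x l2.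
Proof.
elim: l1 => [|y l1 IH] /=; first by split=> [H|[]//]; right.
rewrite IH; tauto.
Qed.

Lemma lin_filter T (x : T) (q : pred T) l : lin x (filter q l) <-> lin x l /\ q x.
Proof.
elim: l => [|y l IH] /=; first by split=> [[]|[]].
case Hq: (q y) => /=; rewrite IH; split.
- by case=> [<-|[]]; [split=> //; left | by split=> //; right].
- by case=> [[<-|Hl] qx]; [left | right].
- by case=> Hl qx; split=> //; right.
- case=> [[<-|Hl] qx]; [by rewrite Hq in qx | by split].
Qed.

Lemma lin_map T U (f : T -> U) y l : lin y (map f l) <-> exists x, lin x l /\ f x = y.
Proof.
elim: l => [|x l IH] /=; first by split=> [[]|[x []]].
rewrite IH; split.
- by case=> [<-|[z [Hz <-]]]; [exists x; split=> //; left | exists z; split=> //; right].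
- by case=> z [[<-|Hz] <-]; [left | right; exists z].
Qed.

Section Compact.
Variable S : InvSemigroup.
Variable P : set S.
Hypothesis HPi : forall x, P x -> idem x.
Hypothesis HP0 : P szero.
Hypothesis HPm : forall x y, P x -> P y -> P (x ⊙ y).
Implicit Types x y z w : S.

Lemma Vset_open x ys : P x -> in_P P ys -> openT P (Vset P x ys).
Proof.
move=> Px Pys; split; first by move=> xi [].
move=> xi [Txi [xix Hys]]; exists [:: x], ys; split=> //.
- by move=> a [<-|[]].
- by split=> // a [<-|[]].
- by move=> eta Teta [H1 H2]; split=> //; split=> //; apply: H1; left.
Qed.

Definition FinCov (C : set (set (set S))) (Y : set (set S)) :=
  exists l : seq (set (set S)), (forall O, lin O l -> C O) /\
      (forall xi, Y xi -> exists O, lin O l /\ O xi).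

Lemma FinCov_sub C Y Y' : Y `<=` Y' -> FinCov C Y' -> FinCov C Y.
Proof. by move=> YY [l [H1 H2]]; exists l; split=> // xi /YY /H2. Qed.

Lemma FinCov_U C Y1 Y2 : FinCov C Y1 -> FinCov C Y2 -> FinCov C (Y1 `|` Y2).
Proof.
move=> [l1 [H11 H12]] [l2 [H21 H22]]; exists (l1 ++ l2); split.
  by move=> O /lin_cat [/H11|/H21].
move=> xi [/H12|/H22] [O [HO Oxi]]; exists O; split=> //; apply/lin_cat; tauto.
Qed.

Lemma FinCov_0 C Y : (forall xi, ~ Y xi) -> FinCov C Y.
Proof. by move=> HY; exists [::]; split=> // xi /HY. Qed.

Lemma chain_lin (F0 : set (set (bool * S))) (Z0 : set (bool * S)) bb (L : seq S) :
  total_on F0 subset -> F0 Z0 ->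
  (forall a, lin a L -> (\bigcup_(X in F0) X) (bb, a)) ->
  exists Z, [/\ F0 Z, Z0 `<=` Z & forall a, lin a L -> Z (bb, a)].
Proof.
move=> tot FZ0; elim: L => [|a L IH] HL; first by exists Z0; split=> // a [].
have [Z [FZ Z0Z HZ]] : exists Z, [/\ F0 Z, Z0 `<=` Z & forall a, lin a L -> Z (bb, a)].
  by apply: IH => b Hb; apply: HL; right.
have [Z1 FZ1 Z1a] := HL a (or_introl erefl).
case: (tot Z Z1 FZ FZ1) => H.
- exists Z1; split=> //; first exact: subset_trans H.
  by move=> b [<-|Hb]; [| apply: H; apply: HZ].
- exists Z; split=> // b [<-|Hb]; [exact: H | exact: HZ].
Qed.

Lemma Vset_compact x ys : P x -> in_P P ys -> compactT P (Vset P x ys).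
Proof.
move=> Px Pys C Copen Ccov.
set K := Vset P x ys.
case: (pselect (FinCov C K)) => // nK; exfalso.
pose KN xs' ys' := [set xi | K xi /\ basic_nbhd xs' ys' xi].
pose Bad (Z : set (bool * S)) := (forall p, Z p -> P p.2) /\
  forall xs' ys', (forall a, lin a xs' -> Z (true, a)) -> (forall b, lin b ys' -> Z (false, b)) ->
    ~ FinCov C (KN xs' ys').
have KN0 : forall xs' ys', (forall xi, K xi -> basic_nbhd xs' ys' xi -> False) ->
    FinCov C (KN xs' ys').
  by move=> xs' ys' H; apply: FinCov_0 => xi [Kxi Hb]; apply: (H xi).
have [Z [BZ Zmax]] : exists Z, Bad Z /\ forall B, Z `<` B -> ~ Bad B.
  apply: Zorn_bigcup => F0 F0B tot; split.
    by move=> p [Z FZ Zp]; apply: (F0B Z FZ).1.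
  move=> xs' ys' Hxs Hys.
  case: (pselect (exists Z0, F0 Z0)) => [[Z0 FZ0]|nF0].
    have [Z1 [FZ1 _ HZ1]] := chain_lin tot FZ0 Hxs.
    have [Z2 [FZ2 Z12 HZ2]] := chain_lin tot FZ1 Hys.
    apply: (F0B Z2 FZ2).2 => // a Ha; exact: Z12 (HZ1 a Ha).
  have xs0 : xs' = [::].
    case: xs' Hxs => // a l /(_ a (or_introl erefl)) [Z FZ _]; by exfalso; apply: nF0; exists Z.
  have ys0 : ys' = [::].
    case: ys' Hys => // a l /(_ a (or_introl erefl)) [Z FZ _]; by exfalso; apply: nF0; exists Z.
  rewrite xs0 ys0 => Hc; apply: nK; apply: FinCov_sub Hc => xi Kxi.
  exact: (conj Kxi (conj (fun a (H : lin a [::]) => match H with end) (fun a (H : lin a [::]) => match H with end))).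
have [ZP Zbad] := BZ.
have notBad : forall B, Z `<` B -> (forall p, B p -> P p.2) ->
    exists xs' ys', [/\ (forall a, lin a xs' -> B (true, a)), (forall b, lin b ys' -> B (false, b)) &
       FinCov C (KN xs' ys')].
  move=> B ZB BP; case: (pselect (exists xs' ys', [/\ (forall a, lin a xs' -> B (true, a)),
     (forall b, lin b ys' -> B (false, b)) & FinCov C (KN xs' ys')])) => // H.
  exfalso; apply: (Zmax B ZB); split=> // xs' ys' H1 H2 H3; apply: H; by exists xs', ys'.
have tot : forall p, P p -> Z (true, p) \/ Z (false, p).
  move=> p Pp; case: (pselect (Z (true, p))) => [|nt]; first by left.
  case: (pselect (Z (false, p))) => [|nf]; first by right.
  exfalso.
  have [xs1 [ys1 [H11 H12 H13]]] : exists xs' ys', [/\ (forall a, lin a xs' -> (Z `|` [set (true, p)]) (true, a)),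
      (forall b, lin b ys' -> (Z `|` [set (true, p)]) (false, b)) & FinCov C (KN xs' ys')].
    apply: notBad.
      split; first by move=> q Zq; left.
      by move=> H; apply: nt; apply: H; right.
    by move=> q [/ZP|->].
  have [xs2 [ys2 [H21 H22 H23]]] : exists xs' ys', [/\ (forall a, lin a xs' -> (Z `|` [set (false, p)]) (true, a)),
      (forall b, lin b ys' -> (Z `|` [set (false, p)]) (false, b)) & FinCov C (KN xs' ys')].
    apply: notBad.
      split; first by move=> q Zq; left.
      by move=> H; apply: nf; apply: H; right.
    by move=> q [/ZP|->].
  pose xs1' := filter (fun a => `[< Z (true, a) >]) xs1.
  pose ys2' := filter (fun a => `[< Z (false, a) >]) ys2.
  apply: (Zbad (xs1' ++ xs2) (ys1 ++ ys2')).
  - move=> a /lin_cat [/lin_filter [_ /asboolP //]|Ha].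
    by case: (H21 a Ha) => // [[]].
  - move=> b /lin_cat [Hb|/lin_filter [_ /asboolP //]].
    by case: (H12 b Hb) => // [[]].
  apply: FinCov_sub (FinCov_U H13 H23).
  move=> xi [Kxi [Hb1 Hb2]].
  case: (pselect (xi p)) => xip; [left | right]; split=> //; split.
  - move=> a Ha; case: (pselect (Z (true, a))) => Za.
      by apply: Hb1; apply/lin_cat; left; apply/lin_filter; split=> //; apply/asboolP.
    by case: (H11 a Ha) => // -[->].
  - by move=> b Hb; apply: Hb2; apply/lin_cat; left.
  - by move=> a Ha; apply: Hb1; apply/lin_cat; right.
  - move=> b Hb; case: (pselect (Z (false, b))) => Zb.
      by apply: Hb2; apply/lin_cat; right; apply/lin_filter; split=> //; apply/asboolP.
    by case: (H22 b Hb) => // -[->].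
pose F := [set a | Z (true, a)].
have single : forall xs' ys', (forall a, lin a xs' -> Z (true, a)) -> (forall b, lin b ys' -> Z (false, b)) ->
   exists xi, K xi /\ basic_nbhd xs' ys' xi.
  move=> xs' ys' H1 H2; case: (pselect (exists xi, K xi /\ basic_nbhd xs' ys' xi)) => // H.
  exfalso; apply: (Zbad xs' ys' H1 H2); apply: KN0 => xi Kxi Hb; apply: H; by exists xi.
have K1 : forall a, Z (true, a) -> forall xi, K xi -> xi a -> True by [].
have lin1 : forall (a : S) b, lin b [:: a] -> b = a by move=> a b [<-|[]].
have Kfilt : forall xi, K xi -> is_filter P xi by move=> xi [[]].
have HF : is_filter P F.
  apply: (mk_filter HP0 (F:=F) (x0:=x)).
  - by move=> a Fa; exact: (ZP _ Fa).
  - case: (tot x Px) => // Zx.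
    have [xi [[_ [xix _]] [_ Hb]]] := single [::] [:: x] (fun a (H : lin a [::]) => match H with end) (fun b Hb => ltac:(rewrite (lin1 _ _ Hb); exact: Zx)).
    by case: (Hb x (or_introl erefl)).
  - move=> Z0.
    have [xi [Kxi [Hb _]]] := single [:: szero] [::] (fun b Hb => ltac:(rewrite (lin1 _ _ Hb); exact: Z0)) (fun a (H : lin a [::]) => match H with end).
    exact: (filter_no0 (Kfilt _ Kxi) (Hb _ (or_introl erefl))).
  - move=> a b Fa Pb ab; case: (tot b Pb) => // Zb.
    have [xi [Kxi [Hb1 Hb2]]] := single [:: a] [:: b] (fun c Hc => ltac:(rewrite (lin1 _ _ Hc); exact: Fa)) (fun c Hc => ltac:(rewrite (lin1 _ _ Hc); exact: Zb)).
    exfalso; apply: (Hb2 b (or_introl erefl)); apply: filter_up (Kfilt _ Kxi) (Hb1 a (or_introl erefl)) Pb ab.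
  - move=> a b Fa Fb; have Pab : P (a ⊙ b) by apply: HPm; [exact: (ZP _ Fa) | exact: (ZP _ Fb)].
    case: (tot _ Pab) => // Zab.
    have [xi [Kxi [Hb1 Hb2]]] := single [:: a; b] [:: a ⊙ b]
       (fun c Hc => ltac:(case: Hc => [<-|[<-|[]]]; [exact: Fa | exact: Fb]))
       (fun c Hc => ltac:(rewrite (lin1 _ _ Hc); exact: Zab)).
    exfalso; apply: (Hb2 _ (or_introl erefl)); apply: filter_meet (Kfilt _ Kxi) _ _.
      exact: Hb1 a (or_introl erefl).
    exact: Hb1 b (or_intror (or_introl erefl)).
have inZ : forall xs' ys', in_P P xs' -> in_P P ys' -> basic_nbhd xs' ys' F ->
    (forall a, lin a xs' -> Z (true, a)) /\ (forall b, lin b ys' -> Z (false, b)).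
  move=> xs' ys' Pxs' Pys' [H1 H2]; split=> // b Hb.
  by case: (tot b (Pys' b Hb)) => // Zb; exfalso; apply: (H2 b Hb).
have KF : K F.
  split; [split=> //|split].
  - move=> xs' ys' Pxs' Pys' Hb; have [H1 H2] := inZ _ _ Pxs' Pys' Hb.
    have [xi [[Txi _] Hxi]] := single _ _ H1 H2.
    exact: Txi.2 _ _ Pxs' Pys' Hxi.
  - case: (tot x Px) => // Zx.
    have [xi [[_ [xix _]] [_ Hb]]] := single [::] [:: x] (fun a (H : lin a [::]) => match H with end) (fun b Hb => ltac:(rewrite (lin1 _ _ Hb); exact: Zx)).
    by case: (Hb x (or_introl erefl)).
  - move=> y Hy Fy.
    have [xi [[_ [_ Hys]] [Hb _]]] := single [:: y] [::] (fun b Hb => ltac:(rewrite (lin1 _ _ Hb); exact: Fy)) (fun a (H : lin a [::]) => match H with end).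
    exact: (Hys y Hy (Hb y (or_introl erefl))).
have [O [CO OF]] := Ccov F KF.
have [_ HO] := Copen O CO.
have [xs' [ys' [Pxs' Pys' HbF HOe]]] := HO F OF.
have [H1 H2] := inZ _ _ Pxs' Pys' HbF.
apply: (Zbad xs' ys' H1 H2); exists [:: O]; split; first by move=> O' [<-|[]].
move=> xi [[Txi _] Hb]; exists O; split; first by left.
exact: HOe.
Qed.

End Compact.


Section Incl.
Variables S1 S2 : InvSemigroup.
Variable P1 : set S1.
Variable P2 : set S2.
Variable iota : S1 -> S2.
Record semil (S : InvSemigroup) (P : set S) := {
  sP_idem : forall x, P x -> idem x;
  sP_0 : P szero;
  sP_mul : forall x y, P x -> P y -> P (x ⊙ y) }.
Record incl := {
  i_s1 : semil P1; i_s2 : semil P2; i_inj : injective iota; i_zero : iota szero = szero;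
  i_mul : forall a b, iota (a ⊙ b) = iota a ⊙ iota b;
  i_cov : preserves_fcovers P1 P2 iota }.
Variable HI : incl.
Let HP1i : forall x, P1 x -> idem x := sP_idem (i_s1 HI).
Let HP10 : P1 szero := sP_0 (i_s1 HI).
Let HP1m : forall x y, P1 x -> P1 y -> P1 (x ⊙ y) := sP_mul (i_s1 HI).
Let HP2i : forall x, P2 x -> idem x := sP_idem (i_s2 HI).
Let HP20 : P2 szero := sP_0 (i_s2 HI).
Let HP2m : forall x y, P2 x -> P2 y -> P2 (x ⊙ y) := sP_mul (i_s2 HI).
Let Hinj : injective iota := i_inj HI.
Let Hzero : iota szero = szero := i_zero HI.
Let Hmul : forall a b, iota (a ⊙ b) = iota a ⊙ iota b := i_mul HI.
Let Hcov : preserves_fcovers P1 P2 iota := i_cov HI.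

Definition restr1 (xi : set S2) : set S1 := [set x | P1 x /\ xi (iota x)].

Lemma iota0 x : iota x = szero -> x = szero.
Proof. by rewrite -Hzero => /Hinj. Qed.

Lemma iotaP x : P1 x -> P2 (iota x).
Proof.
move=> Px.
have Hc : fcover P1 x [:: x].
  split; first by move=> c [<-|[]]; split=> //; exact: HP1i.
  move=> y Py ny yx; exists x; split; first by left.
  by rewrite yx.
have [H _] := Hcov Px Hc; exact: (H (iota x) (or_introl erefl)).1.
Qed.

Lemma iota_le x y : leS x y -> leS (iota x) (iota y).
Proof. by rewrite /leS -Hmul => ->. Qed.

Lemma restr_filter xi : is_filter P2 xi -> (exists x, P1 x /\ xi (iota x)) ->
  is_filter P1 (restr1 xi).
Proof.
move=> Hxi [x0 [Px0 xix0]].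
apply: (mk_filter HP10 (x0 := x0)).
- by move=> x [].
- by [].
- by move=> [_]; rewrite Hzero; apply: (filter_no0 Hxi).
- move=> x y [Px xix] Py xy; split=> //.
  exact: filter_up Hxi xix (iotaP Py) (iota_le xy).
- move=> x y [Px xix] [Py xiy]; split; first exact: HP1m.
  by rewrite Hmul; exact: filter_meet Hxi xix xiy.
Qed.

Lemma restr_tight xi : Tight P2 xi -> (exists x, P1 x /\ xi (iota x)) ->
  Tight P1 (restr1 xi).
Proof.
move=> [Hxi Txi] Hex; have Hr := restr_filter Hxi Hex.
split=> // xs ys Pxs Pys [Hb1 Hb2].
have [x0 [Px0 xix0]] := Hex.
have [Fm mx0 mxs] := meetl HP1i Hr (conj Px0 xix0) Hb1.
set m := foldr smul x0 xs in Fm mx0 mxs.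
have [Pm xim] := Fm.
have [z [Pz nz zm zys]] : exists z, [/\ P1 z, z <> szero, leS z m & forall y, lin y ys -> z ⊙ y = szero].
  case: (pselect (exists z, [/\ P1 z, z <> szero, leS z m & forall y, lin y ys -> z ⊙ y = szero])) => // Hn.
  exfalso.
  pose C := map (fun y => m ⊙ y) ys.
  have HC : fcover P1 m C.
    split.
      move=> c /lin_map [y [Hy <-]]; split; first exact: HP1m (Pys y Hy).
      exact: leS_mull (HP1i Pm) (HP1i (Pys y Hy)).
    move=> y' Py' ny' y'm.
    case: (pselect (exists y, lin y ys /\ y' ⊙ y <> szero)) => [[y [Hy Hy']]|Hn'].
      exists (m ⊙ y); split; first by apply/lin_map; exists y.
      by rewrite smulA y'm.
    exfalso; apply: Hn; exists y'; split=> // y Hy.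
    by case: (pselect (y' ⊙ y = szero)) => // H; exfalso; apply: Hn'; exists y.
  have HC2 := Hcov Pm HC.
  have [W [HW [HW1 HW2]]] : exists W, is_ultrafilter P2 W /\ basic_nbhd [:: iota m] (map iota ys) W.
    apply: Txi.
    - by move=> a [<-|[]]; exact: iotaP.
    - by move=> a /lin_map [y [Hy <-]]; apply: iotaP; apply: Pys.
    - split; first by move=> a [<-|[]].
      move=> a /lin_map [y [Hy <-]] xiy; apply: (Hb2 y Hy); split=> //; exact: Pys.
  have [c [Hc Wc]] := uf_cover HP2i HP20 HP2m HW (HW1 _ (or_introl erefl)) HC2.
  move: Hc => /lin_map [c' [/lin_map [y [Hy <-]] Hc']].
  apply: (HW2 (iota y)); first by apply/lin_map; exists y.
  apply: filter_up (uf_filter HW) Wc (iotaP (Pys y Hy)) _.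
  rewrite -Hc' Hmul; apply: leS_mulr; apply: HP2i; apply: iotaP; exact: Pys.
have [U [HU Uz]] := uf_exists HP1i HP10 HP1m Pz nz.
exists U; split=> //; split.
- move=> a Ha; apply: filter_up (uf_filter HU) Uz (Pxs a Ha) _.
  exact: leS_trans zm (mxs a Ha).
- move=> y Hy Uy; apply: (filter_no0 (uf_filter HU)).
  rewrite -(zys y Hy); exact: filter_meet (uf_filter HU) Uz Uy.
Qed.

Lemma Tmap_Vset m ys : P1 m -> in_P P1 ys ->
  Tmap P1 P2 iota (Vset P1 m ys) = Vset P2 (iota m) (map iota ys).
Proof.
move=> Pm Pys; apply/seteqP; split.
- move=> xi [Txi _ [_ [[_ xim] Hys]]]; split=> //; split=> //.
  move=> a /lin_map [y [Hy <-]] xiy; apply: (Hys y Hy); split=> //; exact: Pys.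
- move=> xi [Txi [xim Hys]].
  have Hex : exists x, P1 x /\ xi (iota x) by exists m.
  split=> //; split; first exact: restr_tight.
  split; first by split.
  move=> y Hy [_ xiy]; apply: (Hys (iota y)) => //; apply/lin_map; by exists y; split.
Qed.


Lemma compactT_U P (A B : set (set S2)) : compactT P A -> compactT P B -> compactT P (A `|` B).
Proof.
move=> HA HB C Copen Ccov.
have [l1 [H11 H12]] := HA C Copen (fun xi Axi => Ccov xi (or_introl Axi)).
have [l2 [H21 H22]] := HB C Copen (fun xi Bxi => Ccov xi (or_intror Bxi)).
exists (l1 ++ l2); split; first by move=> O /lin_cat [/H11|/H21].
move=> xi [/H12|/H22] [O [HO Oxi]]; exists O; split=> //; apply/lin_cat; tauto.
Qed.

Lemma compactT_0 P : compactT P (set0 : set (set S2)).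
Proof. by move=> C _ _; exists [::]; split=> // xi []. Qed.

Lemma Tmap_mono U V : U `<=` V -> Tmap P1 P2 iota U `<=` Tmap P1 P2 iota V.
Proof. by move=> UV xi [H1 H2 H3]; split=> //; apply: UV. Qed.

Lemma Tmap_Tc U : Tc P1 U -> Tc P2 (Tmap P1 P2 iota U).
Proof.
move=> [[UT Uopen] Ucomp].
pose C := [set O : set (set S1) | exists m ys, [/\ P1 m, in_P P1 ys, O = Vset P1 m ys & O `<=` U]].
have [l [lC lcov]] : exists l, (forall O, lin O l -> C O) /\ (forall xi, U xi -> exists O, lin O l /\ O xi).
  apply: Ucomp.
    by move=> O [m [ys [Pm Pys -> _]]]; apply: Vset_open.
  move=> eta Ueta.
  have [xs [ys [Pxs Pys Hb Hsub]]] := Uopen eta Ueta.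
  have Teta := UT _ Ueta.
  have [_ [x0 etax0] _ _ _] := Teta.1.
  have [Fm _ mxs] := meetl HP1i Teta.1 etax0 Hb.1.
  have Pm : P1 (foldr smul x0 xs) by apply: (filter_sub Teta.1).
  exists (Vset P1 (foldr smul x0 xs) ys); split.
    exists (foldr smul x0 xs), ys; split=> //.
    move=> zeta [Tz [zm zys]]; apply: Hsub => //; split=> // a Ha.
    exact: filter_up Tz.1 zm (Pxs a Ha) (mxs a Ha).
  by split=> //; split=> //; exact: Hb.2.
pose bigl := [set xi | exists O, lin O l /\ Tmap P1 P2 iota O xi].
have Heq : Tmap P1 P2 iota U = bigl.
  apply/seteqP; split.
    move=> xi Hxi; have [_ _ Ur] := Hxi.
    have [O [HO Or]] := lcov _ Ur.
    exists O; split=> //; by case: Hxi.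
  move=> xi [O [HO HxiO]]; have [m [ys [_ _ _ OU]]] := lC O HO.
  exact: Tmap_mono OU _ HxiO.
have Hopen : openT P2 (Tmap P1 P2 iota U).
  split; first by move=> xi [].
  rewrite Heq => xi [O [HO HxiO]].
  have [m [ys [Pm Pys EO OU]]] := lC O HO.
  move: HxiO; rewrite EO Tmap_Vset // => [[Txi [xim Hys]]].
  exists [:: iota m], (map iota ys); split.
  - by move=> a [<-|[]]; apply: iotaP.
  - by move=> a /lin_map [y [Hy <-]]; apply: iotaP; apply: Pys.
  - by split=> // a [<-|[]].
  - move=> eta Teta [H1 H2]; exists O; split=> //.
    rewrite EO Tmap_Vset //; split=> //; split=> //; exact: H1 (iota m) (or_introl erefl).
split=> //; rewrite Heq.
have : forall l', (forall O, lin O l' -> C O) ->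
    compactT P2 [set xi | exists O, lin O l' /\ Tmap P1 P2 iota O xi].
  elim=> [|O l' IH] Hl'.
    have -> : [set xi | exists O, lin O [::] /\ Tmap P1 P2 iota O xi] = set0.
      by apply/seteqP; split=> // xi [O [[]]].
    exact: compactT_0.
  have -> : [set xi | exists O', lin O' (O :: l') /\ Tmap P1 P2 iota O' xi] =
     Tmap P1 P2 iota O `|` [set xi | exists O, lin O l' /\ Tmap P1 P2 iota O xi].
    apply/seteqP; split.
      by move=> xi [O' [[<-|HO'] H]]; [left | right; exists O'].
    by move=> xi [H|[O' [HO' H]]]; [exists O; split=> //; left | exists O'; split=> //; right].
  apply: compactT_U; last by apply: IH => O' HO'; apply: Hl'; right.
  have [m [ys [Pm Pys -> _]]] := Hl' O (or_introl erefl).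
  rewrite Tmap_Vset //; apply: Vset_compact => //.
  - exact: iotaP.
  - by move=> a /lin_map [y [Hy <-]]; apply: iotaP; apply: Pys.
by move=> /(_ l lC).
Qed.

Lemma uf_extend w : is_ultrafilter P1 w -> exists W, is_ultrafilter P2 W /\ restr1 W = w.
Proof.
move=> Hw; have Hwf := uf_filter Hw.
have [_ [w0 ww0] _ _ _] := Hwf.
pose F := [set y | P2 y /\ exists a, w a /\ leS (iota a) y].
have HF : is_filter P2 F.
  apply: (mk_filter HP20 (x0 := iota w0)).
  - by move=> y [].
  - split; first by apply: iotaP; exact: filter_sub Hwf _ ww0.
    exists w0; split=> //; apply: HP2i; apply: iotaP; exact: filter_sub Hwf _ ww0.
  - move=> [_ [a [wa /leS0 /iota0 a0]]]; apply: (filter_no0 Hwf); by rewrite -a0.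
  - move=> x y [Px [a [wa ax]]] Py xy; split=> //; exists a; split=> //; exact: leS_trans xy.
  - move=> x y [Px [a [wa ax]]] [Py [b [wb bx]]]; split; first exact: HP2m.
    exists (a ⊙ b); split; first exact: filter_meet Hwf wa wb.
    rewrite Hmul; apply: (leS_mul2 _ _ ax bx); first exact: HP2i.
    apply: HP2i; apply: iotaP; exact: filter_sub Hwf _ wb.
have [W [HW FW]] := uf_ext HP20 HF.
exists W; split=> //.
have wW : w `<=` restr1 W.
  move=> a wa; split; first exact: filter_sub Hwf _ wa.
  apply: FW; split; first by apply: iotaP; exact: filter_sub Hwf _ wa.
  exists a; split=> //; apply: HP2i; apply: iotaP; exact: filter_sub Hwf _ wa.
apply: Hw.2 => //; apply: restr_filter (uf_filter HW) _.
exists w0; exact: wW.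
Qed.

Lemma Tmap_sub U V : Tc P1 U -> Tc P1 V -> Tmap P1 P2 iota U `<=` Tmap P1 P2 iota V -> U `<=` V.
Proof.
move=> [[UT Uopen] Ucomp] [[VT Vopen] Vcomp] HUV eta Ueta.
case: (pselect (V eta)) => // nVeta; exfalso.
have Teta := UT _ Ueta.
pose C := [set O : set (set S1) | openT P1 O /\ exists xs ys, [/\ in_P P1 xs, in_P P1 ys,
   basic_nbhd xs ys eta & forall zeta, O zeta -> ~ basic_nbhd xs ys zeta]].
have [l [lC lcov]] : exists l, (forall O, lin O l -> C O) /\ (forall xi, V xi -> exists O, lin O l /\ O xi).
  apply: Vcomp; first by move=> O [].
  move=> zeta Vzeta; have Tz := VT _ Vzeta.
  have [y [Py Hy]] : exists y, P1 y /\ ((zeta y /\ ~ eta y) \/ (eta y /\ ~ zeta y)).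
    case: (pselect (exists y, P1 y /\ ((zeta y /\ ~ eta y) \/ (eta y /\ ~ zeta y)))) => // H.
    exfalso; apply: nVeta.
    have -> : eta = zeta; last by [].
    apply/seteqP; split=> y Hy.
      have Py : P1 y by apply: (filter_sub Teta.1).
      case: (pselect (zeta y)) => // nz; exfalso; apply: H; exists y; split=> //; right; by split.
    have Py : P1 y by apply: (filter_sub Tz.1).
    case: (pselect (eta y)) => // nz; exfalso; apply: H; exists y; split=> //; left; by split.
  case: Hy => [[zy ney]|[ey nzy]].
  - exists [set th | Tight P1 th /\ th y]; split; last by split.
    split.
      split; first by move=> th [].
      move=> th [Tth thy]; exists [:: y], [::]; split=> //; first by move=> a [<-|[]].
        by split=> // a [<-|[]].
      by move=> et Tet [H1 _]; split=> //; apply: H1; left.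
    exists [::], [:: y]; split=> //; first by move=> a [<-|[]].
      by split=> // a [<-|[]].
    by move=> th [_ thy] [_ H2]; apply: (H2 y) => //; left.
  - exists [set th | Tight P1 th /\ ~ th y]; split; last by split.
    split.
      split; first by move=> th [].
      move=> th [Tth thy]; exists [::], [:: y]; split=> //; first by move=> a [<-|[]].
        by split=> // a [<-|[]].
      by move=> et Tet [_ H2]; split=> //; apply: H2; left.
    exists [:: y], [::]; split=> //; first by move=> a [<-|[]].
      by split=> // a [<-|[]].
    by move=> th [_ thy] [H1 _]; apply: thy; apply: H1; left.
have [xs [ys [Pxs Pys Hb HbO]]] : exists xs ys, [/\ in_P P1 xs, in_P P1 ys, basic_nbhd xs ys eta &
    forall O, lin O l -> forall zeta, O zeta -> ~ basic_nbhd xs ys zeta].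
  elim: l lC {lcov} => [|O l IH] lC.
    exists [::], [::]; split=> //; by split=> a [].
  have [xs [ys [Pxs Pys Hb HbO]]] := IH (fun O' HO' => lC O' (or_intror HO')).
  have [_ [xs' [ys' [Pxs' Pys' Hb' HO]]]] := lC O (or_introl erefl).
  exists (xs' ++ xs), (ys' ++ ys); split.
  - by move=> a /lin_cat [/Pxs'|/Pxs].
  - by move=> a /lin_cat [/Pys'|/Pys].
  - split; first by move=> a /lin_cat [/Hb'.1|/Hb.1].
    by move=> a /lin_cat [/Hb'.2|/Hb.2].
  - move=> O' [<-|HO'] zeta Oz [H1 H2].
      apply: (HO zeta Oz); split=> a Ha; [apply: H1 | apply: H2]; apply/lin_cat; by left.
    apply: (HbO O' HO' zeta Oz); split=> a Ha; [apply: H1 | apply: H2]; apply/lin_cat; by right.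
have [xsU [ysU [PxsU PysU HbU HU]]] := Uopen eta Ueta.
have [om [Hom [Hom1 Hom2]]] : exists om, is_ultrafilter P1 om /\ basic_nbhd (xs ++ xsU) (ys ++ ysU) om.
  apply: Teta.2.
  - by move=> a /lin_cat [/Pxs|/PxsU].
  - by move=> a /lin_cat [/Pys|/PysU].
  split; first by move=> a /lin_cat [/Hb.1|/HbU.1].
  by move=> a /lin_cat [/Hb.2|/HbU.2].
have Uom : U om.
  apply: HU; first exact: uf_tight.
  by split=> a Ha; [apply: Hom1 | apply: Hom2]; apply/lin_cat; right.
have nVom : ~ V om.
  move=> /lcov [O [HO Oom]]; apply: (HbO O HO om Oom).
  by split=> a Ha; [apply: Hom1 | apply: Hom2]; apply/lin_cat; left.
have [W [HW EW]] := uf_extend Hom.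
have [_ [w0 omw0] _ _ _] := (uf_filter Hom).
have : Tmap P1 P2 iota U W.
  split; first exact: (uf_tight HW).
    by exists w0; rewrite -EW in omw0; case: omw0.
  by rewrite /restr1 in EW; rewrite EW.
move=> /HUV [_ _]; rewrite /restr1 in EW; rewrite EW; exact: nVom.
Qed.

End Incl.


Section Conj.
Variable S : InvSemigroup.
Implicit Types a b s t x y z w : S.

Lemma EsetI x : @Eset S x -> idem x. Proof. by []. Qed.
Lemma Eset0 : @Eset S szero. Proof. exact: idem0. Qed.
Lemma EsetM x y : @Eset S x -> @Eset S y -> @Eset S (x ⊙ y). Proof. exact: idem_mul. Qed.

Lemma conj_idem t x : idem x -> idem (t ⊙ x ⊙ sinv t).
Proof.
move=> Hx; rewrite /idem.
have -> : t ⊙ x ⊙ sinv t ⊙ (t ⊙ x ⊙ sinv t) = t ⊙ (x ⊙ (sinv t ⊙ t)) ⊙ x ⊙ sinv t by rewrite !smulA.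
by rewrite (idem_comm Hx (sinvs_idem t)) !smulA sinv_l (idem_r _ Hx).
Qed.

Lemma conj_le t x : idem x -> leS (t ⊙ x ⊙ sinv t) (t ⊙ sinv t).
Proof.
move=> Hx; rewrite /leS.
have -> : t ⊙ x ⊙ sinv t ⊙ (t ⊙ sinv t) = t ⊙ (x ⊙ (sinv t ⊙ t)) ⊙ sinv t by rewrite !smulA.
by rewrite (idem_comm Hx (sinvs_idem t)) !smulA sinv_l.
Qed.

Lemma conj_mono t a b : idem a -> idem b -> leS a b -> leS (t ⊙ a ⊙ sinv t) (t ⊙ b ⊙ sinv t).
Proof.
move=> Ha Hb; rewrite /leS => ab.
have -> : t ⊙ a ⊙ sinv t ⊙ (t ⊙ b ⊙ sinv t) = t ⊙ (a ⊙ (sinv t ⊙ t)) ⊙ b ⊙ sinv t by rewrite !smulA.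
rewrite (idem_comm Ha (sinvs_idem t)) !smulA sinv_l.
by rewrite -(smulA t a b) ab.
Qed.

Lemma conj_cancel t z : idem z -> leS z (t ⊙ sinv t) -> t ⊙ (sinv t ⊙ z ⊙ t) ⊙ sinv t = z.
Proof.
move=> Hz; rewrite /leS => zt.
have -> : t ⊙ (sinv t ⊙ z ⊙ t) ⊙ sinv t = (t ⊙ sinv t) ⊙ z ⊙ (t ⊙ sinv t) by rewrite !smulA.
by rewrite -(idem_comm Hz (ssinv_idem t)) zt zt.
Qed.

Lemma conj_mul t z1 z2 : idem z2 -> leS z2 (t ⊙ sinv t) ->
  (sinv t ⊙ z1 ⊙ t) ⊙ (sinv t ⊙ z2 ⊙ t) = sinv t ⊙ (z1 ⊙ z2) ⊙ t.
Proof.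
move=> Hz2; rewrite /leS => zt.
have -> : sinv t ⊙ z1 ⊙ t ⊙ (sinv t ⊙ z2 ⊙ t) = sinv t ⊙ z1 ⊙ ((t ⊙ sinv t) ⊙ z2) ⊙ t by rewrite !smulA.
by rewrite -(idem_comm Hz2 (ssinv_idem t)) zt !smulA.
Qed.

Lemma conj_back t x : idem x -> sinv t ⊙ (t ⊙ x ⊙ sinv t) ⊙ t = sinv t ⊙ t ⊙ x.
Proof.
move=> Hx.
have -> : sinv t ⊙ (t ⊙ x ⊙ sinv t) ⊙ t = (sinv t ⊙ t) ⊙ (x ⊙ (sinv t ⊙ t)) by rewrite !smulA.
by rewrite (idem_comm Hx (sinvs_idem t)) smulA (sinvs_idem t).
Qed.

Lemma conj_mulE t a b : idem a ->
  (t ⊙ a ⊙ sinv t) ⊙ (t ⊙ b ⊙ sinv t) = t ⊙ (a ⊙ b) ⊙ sinv t.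
Proof.
move=> Ha.
have -> : t ⊙ a ⊙ sinv t ⊙ (t ⊙ b ⊙ sinv t) = t ⊙ (a ⊙ (sinv t ⊙ t)) ⊙ b ⊙ sinv t by rewrite !smulA.
by rewrite (idem_comm Ha (sinvs_idem t)) !smulA sinv_l.
Qed.

Lemma le_back t x : idem x -> leS (sinv t ⊙ t ⊙ x) x.
Proof. by move=> Hx; apply: leS_mulr. Qed.

Definition transp (xi : set S) t : set S :=
  [set y | idem y /\ exists z, [/\ xi z, leS z (t ⊙ sinv t) & leS (sinv t ⊙ z ⊙ t) y]].

Lemma transp_back xi t y : is_filter (@Eset S) xi -> transp xi t y -> xi (t ⊙ y ⊙ sinv t).
Proof.
move=> Hxi [Hy [z [xiz zt zy]]].
have Hz : idem z by apply: (filter_sub Hxi).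
apply: filter_up Hxi xiz (conj_idem t Hy) _.
rewrite -{1}(conj_cancel Hz zt); apply: conj_mono zy => //.
have := conj_idem (sinv t) Hz; by rewrite sinvK.
Qed.

Lemma transp_in xi t w : xi w -> idem w -> leS w (t ⊙ sinv t) -> transp xi t (sinv t ⊙ w ⊙ t).
Proof.
move=> xiw Hw wt; split; first by have := conj_idem (sinv t) Hw; rewrite sinvK.
by exists w; split=> //; have := conj_idem (sinv t) Hw; rewrite sinvK.
Qed.

Lemma transp_filter xi t : is_filter (@Eset S) xi -> xi (t ⊙ sinv t) -> is_filter (@Eset S) (transp xi t).
Proof.
move=> Hxi xit.
apply: (mk_filter Eset0 (x0 := sinv t ⊙ t)).
- by move=> y [].
- split; first exact: sinvs_idem.
  exists (t ⊙ sinv t); split=> //; first exact: ssinv_idem.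
  by rewrite /leS !smulA sinv_r sinv_r.
- move=> [_ [z [xiz zt /leS0 z0]]]; apply: (filter_no0 Hxi).
  have Hz : idem z by apply: (filter_sub Hxi).
  by rewrite -(conj_cancel Hz zt) z0 smul0r smul0l in xiz.
- move=> a b [Ha [z [xiz zt za]]] Hb ab; split=> //; exists z; split=> //; exact: leS_trans ab.
- move=> a b [Ha [z1 [xiz1 z1t z1a]]] [Hb [z2 [xiz2 z2t z2b]]]; split; first exact: idem_mul.
  have Hz1 : idem z1 by apply: (filter_sub Hxi).
  have Hz2 : idem z2 by apply: (filter_sub Hxi).
  exists (z1 ⊙ z2); split; first exact: filter_meet Hxi xiz1 xiz2.
    apply: leS_trans z1t; exact: leS_mull.
  rewrite -(conj_mul _ Hz2 z2t); apply: leS_mul2 => //.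
  have := conj_idem (sinv t) Hz2; by rewrite sinvK.
Qed.

Lemma transp_ultra om t : is_ultrafilter (@Eset S) om -> om (t ⊙ sinv t) ->
  is_ultrafilter (@Eset S) (transp om t).
Proof.
move=> Hom omt; have Homf := uf_filter Hom.
have Ht := transp_filter Homf omt; split=> // F HF sub.
have Ftt : F (sinv t ⊙ t).
  apply: sub; split; first exact: sinvs_idem.
  exists (t ⊙ sinv t); split=> //; first exact: ssinv_idem.
  by rewrite /leS !smulA sinv_r sinv_r.
have HF' : is_filter (@Eset S) (transp F (sinv t)).
  by apply: transp_filter => //; rewrite sinvK.
have omF' : om `<=` transp F (sinv t).
  move=> w omw; have Hw : idem w by apply: (filter_sub Homf).
  split=> //; exists (sinv t ⊙ w ⊙ t); rewrite sinvK; split.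
  - apply: sub.
    have -> : sinv t ⊙ w ⊙ t = sinv t ⊙ (w ⊙ (t ⊙ sinv t)) ⊙ t.
      by rewrite !smulA -(smulA _ t (sinv t)) -(smulA _ (t ⊙ sinv t)) sinv_l.
    apply: transp_in; first exact: filter_meet Homf omw omt.
      exact: idem_mul (ssinv_idem t).
    exact: leS_mulr (ssinv_idem t).
  - have := conj_le (sinv t) Hw; by rewrite sinvK.
  - have := conj_back (sinv t) Hw; rewrite sinvK => ->.
    have := le_back (sinv t) Hw; by rewrite sinvK.
have F'om : transp F (sinv t) = om by apply: Hom.2.
have Fsub : F `<=` transp om t.
  move=> y Fy; have Hy : idem y by apply: (filter_sub HF).
  set y' := y ⊙ (sinv t ⊙ t).
  have Hy' : idem y' := idem_mul Hy (sinvs_idem t).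
  have Fy' : F y' := filter_meet HF Fy Ftt.
  have y't : leS y' (sinv t ⊙ t) := leS_mulr _ (sinvs_idem t).
  have omy' : om (t ⊙ y' ⊙ sinv t).
    have := transp_in (t := sinv t) Fy' Hy'; rewrite sinvK => H; rewrite -F'om; exact: H y't.
  split=> //; exists (t ⊙ y' ⊙ sinv t); split=> //; first exact: conj_le.
  rewrite conj_back //; apply: leS_trans (le_back t Hy') _.
  exact: leS_mull Hy (sinvs_idem t).
by apply/seteqP; split.
Qed.

Lemma transp_tight xi t : Tight (@Eset S) xi -> xi (t ⊙ sinv t) -> Tight (@Eset S) (transp xi t).
Proof.
move=> [Hxi Txi] xit; have Hz := transp_filter Hxi xit; split=> // xs ys Pxs Pys [Hb1 Hb2].
have [om [Hom [Hom1 Hom2]]] : exists U, is_ultrafilter (@Eset S) U /\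
   basic_nbhd (t ⊙ sinv t :: map (fun x => t ⊙ x ⊙ sinv t) xs) (map (fun y => t ⊙ y ⊙ sinv t) ys) U.
  apply: Txi.
- move=> a [<-|/lin_map [x [Hx <-]]]; first exact: ssinv_idem.
  exact: conj_idem (Pxs x Hx).
- move=> a /lin_map [x [Hx <-]]; exact: conj_idem (Pys x Hx).
- split.
    move=> a [<-|/lin_map [x [Hx <-]]] //.
    exact: transp_back Hxi (Hb1 x Hx).
  move=> a /lin_map [y [Hy <-]] xiy; apply: (Hb2 y Hy).
  have Hyi : idem y := Pys y Hy.
  split=> //; exists (t ⊙ y ⊙ sinv t); split=> //; first exact: conj_le.
  by rewrite conj_back //; exact: le_back.
exists (transp om t); split; first by apply: transp_ultra => //; apply: Hom1; left.
split.
  move=> x Hx; have Hxx : idem x := Pxs x Hx.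
  split=> //; exists (t ⊙ x ⊙ sinv t); split.
  - apply: Hom1; right; apply/lin_map; by exists x.
  - exact: conj_le.
  - by rewrite conj_back //; exact: le_back.
move=> y Hy omy; apply: (Hom2 (t ⊙ y ⊙ sinv t)); first by apply/lin_map; exists y.
exact: transp_back (uf_filter Hom) omy.
Qed.

End Conj.


Section GrpL.
Variable G : Grp.
Implicit Types a b c : G.

Lemma gmulV a : gmul a (ginv a) = gone.
Proof.
rewrite -[LHS]gmul1l -{1}(gmulVl (ginv a)) -gmulA (gmulA (ginv a)) gmulVl gmul1l.
exact: gmulVl.
Qed.

Lemma gmul1r a : gmul a gone = a.
Proof. by rewrite -(gmulVl a) gmulA gmulV gmul1l. Qed.

Lemma ginv_uniq a b : gmul a b = gone -> b = ginv a.
Proof. by move=> H; rewrite -[b]gmul1l -(gmulVl a) -gmulA H gmul1r. Qed.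

Lemma ginvK a : ginv (ginv a) = a.
Proof. by symmetry; apply: ginv_uniq; exact: gmulVl. Qed.

End GrpL.

Section Grading.
Variable S : InvSemigroup.
Variable G : Grp.
Variable phi : S -> G.
Hypothesis Hphi : pure_grading phi.
Implicit Types a b s t r q x y z w : S.

Lemma nz_ssinv s : s <> szero -> s ⊙ sinv s <> szero.
Proof. by move=> ns e; apply: ns; rewrite -(sinv_l s) e smul0l. Qed.

Lemma nz_sinvs s : s <> szero -> sinv s ⊙ s <> szero.
Proof. by move=> ns e; apply: ns; rewrite -(sinv_l s) -smulA e smul0r. Qed.

Lemma nz_sinv s : s <> szero -> sinv s <> szero.
Proof. by move=> ns e; apply: ns; rewrite -(sinvK s) e sinv0. Qed.

Lemma grade_idem e : e <> szero -> idem e -> phi e = gone.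
Proof. by move=> ne He; apply/(Hphi.2 e ne). Qed.

Lemma grade_inv s : s <> szero -> phi (sinv s) = ginv (phi s).
Proof.
move=> ns; apply: ginv_uniq; rewrite -(Hphi.1 _ _ (nz_ssinv ns)).
exact: grade_idem (nz_ssinv ns) (ssinv_idem s).
Qed.

Lemma conjE t w : idem w -> t ⊙ w ⊙ sinv t = (t ⊙ w) ⊙ sinv (t ⊙ w).
Proof. by move=> Hw; rewrite sinv_mul (idem_sinv Hw) smulA -(smulA t w w) Hw. Qed.

Lemma WD s r w : phi s = phi r -> idem w -> leS w (sinv s ⊙ s) -> leS w (sinv r ⊙ r) ->
  s ⊙ w = r ⊙ w.
Proof.
move=> Hsr Hw ws wr.
case: (pselect (w = szero)) => [->|nw]; first by rewrite !smul0r.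
have Hw_s : sinv s ⊙ s ⊙ w = w by rewrite -(idem_comm Hw (sinvs_idem s)).
have Hw_r : w ⊙ (sinv r ⊙ r) = w by [].
set p := s ⊙ w ⊙ sinv r.
have psw : p ⊙ (r ⊙ w) = s ⊙ w.
  by rewrite /p !smulA -(smulA (s ⊙ w) (sinv r) r) -(smulA s w) Hw_r (idem_r _ Hw).
have nsw : s ⊙ w <> szero.
  by move=> e; apply: nw; rewrite -Hw_s -smulA e smul0r.
have np : p <> szero.
  by move=> e; apply: nsw; rewrite -psw e smul0l.
have nr : r <> szero by move=> e; apply: np; rewrite /p e sinv0 smul0r.
have ns : s <> szero by move=> e; apply: nsw; rewrite e smul0l.
have Hp : idem p.
  apply/(Hphi.2 p np); rewrite /p (Hphi.1 _ _ np) (Hphi.1 _ _ nsw).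
  rewrite (grade_idem nw Hw) gmul1r grade_inv // Hsr; exact: gmulV.
have pK : sinv p = p := idem_sinv Hp.
have prw : p ⊙ (s ⊙ w) = r ⊙ w.
  rewrite -{1}pK /p !sinv_mul sinvK (idem_sinv Hw) !smulA.
  have -> : r ⊙ w ⊙ sinv s ⊙ s ⊙ w = r ⊙ w ⊙ (sinv s ⊙ s ⊙ w) by rewrite !smulA.
  by rewrite Hw_s -smulA Hw.
by rewrite -psw -{1}prw smulA Hp prw.
Qed.

Definition Egs g := Eg phi g.

Lemma Eg_idem g x : Eg phi g x -> idem x. Proof. by case. Qed.
Lemma Eg0 g : Eg phi g szero. Proof. by split; [exact: idem0 | left]. Qed.
Lemma Eg_ideal g x y : Eg phi g x -> idem y -> leS y x -> Eg phi g y.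
Proof.
move=> [Hx [->|[s [ns gs xs]]]] Hy yx; split=> //.
  by left; exact: leS0.
by right; exists s; split=> //; exact: leS_trans xs.
Qed.
Lemma EgM g x y : Eg phi g x -> Eg phi g y -> Eg phi g (x ⊙ y).
Proof.
move=> Hx Hy; apply: (Eg_ideal Hx); first exact: idem_mul (Eg_idem Hx) (Eg_idem Hy).
exact: leS_mull (Eg_idem Hx) (Eg_idem Hy).
Qed.

Lemma Eg_cov g : preserves_fcovers (Eg phi g) (@Eset S) id.
Proof.
move=> x C Px [H1 H2]; split.
  move=> c; rewrite map_id => Hc; have [Pc cx] := H1 c Hc; split; [exact: Eg_idem Pc | exact: cx].
move=> y Py ny yx; rewrite map_id; apply: H2 => //.
exact: Eg_ideal Px Py yx.
Qed.

Lemma Eg_conj g s x : s <> szero -> phi s = g -> idem x -> Eg phi g (s ⊙ x ⊙ sinv s).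
Proof. by move=> ns gs Hx; split; [exact: conj_idem | right; exists s; split=> //; exact: conj_le]. Qed.

Lemma Eg_nz g x : Eg phi g x -> x <> szero -> exists s, [/\ s <> szero, phi s = g & leS x (s ⊙ sinv s)].
Proof. by move=> [_ [//|H]]. Qed.

End Grading.


Lemma semil_E (S : InvSemigroup) : semil (@Eset S).
Proof. by split; [move=> x | exact: idem0 | move=> x y; exact: idem_mul]. Qed.

Lemma semil_Eg (S : InvSemigroup) (G : Grp) (phi : S -> G) g : semil (Eg phi g).
Proof. by split; [move=> x; exact: Eg_idem | exact: Eg0 | move=> x y; exact: EgM]. Qed.

Lemma incl_Eg (S : InvSemigroup) (G : Grp) (phi : S -> G) g : incl (Eg phi g) (@Eset S) id.
Proof. by split=> //; [exact: semil_Eg | exact: semil_E | exact: Eg_cov]. Qed.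

Section Main.
Variables (G : Grp) (S1 S2 : InvSemigroup) (phi : S2 -> G) (iota : S1 -> S2).
Hypothesis Hphi : pure_grading phi.
Hypothesis Hinj : injective iota.
Hypothesis Hzero : iota szero = szero.
Hypothesis Hmul : forall a b, iota (smul a b) = smul (iota a) (iota b).
Hypothesis Hcov : preserves_fcovers (@Eset S1) (@Eset S2) iota.
Let phi1 : S1 -> G := fun s => phi (iota s).

Lemma I12 : incl (@Eset S1) (@Eset S2) iota.
Proof. by split=> //; exact: semil_E. Qed.

Lemma iota_sinv s : iota (sinv s) = sinv (iota s).
Proof.
apply: sinv_uniq; rewrite -!Hmul; [exact/(f_equal iota)/sinv_l | exact/(f_equal iota)/sinv_r].
Qed.

Lemma iota_nz s : s <> szero -> iota s <> szero.
Proof. by move=> ns e; apply: ns; apply: Hinj; rewrite e Hzero. Qed.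

Lemma iota_idem x : idem x -> idem (iota x).
Proof. by rewrite /idem -Hmul => ->. Qed.

Lemma idem_iota x : idem (iota x) -> idem x.
Proof. by rewrite /idem -Hmul => /Hinj. Qed.

Lemma phi1_pure : pure_grading phi1.
Proof.
split.
  move=> a b nab; rewrite /phi1 Hmul; apply: Hphi.1.
  by rewrite -Hmul; exact: iota_nz.
move=> s ns; rewrite /phi1; split.
  by move=> /(Hphi.2 _ (iota_nz ns)); exact: idem_iota.
by move=> /iota_idem /(Hphi.2 _ (iota_nz ns)).
Qed.

Lemma iota_conj s x : iota (s ⊙ x ⊙ sinv s) = iota s ⊙ iota x ⊙ sinv (iota s).
Proof. by rewrite !Hmul iota_sinv. Qed.

Lemma iota_leM x y : leS x y -> leS (iota x) (iota y).
Proof. by rewrite /leS -Hmul => ->. Qed.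

Lemma Eg_iota g x : Eg phi1 g x -> Eg phi g (iota x).
Proof.
move=> [Hx Hor]; split; first exact: (iota_idem Hx).
case: Hor => [->|[s [ns gs xs]]]; first by left.
- right; exists (iota s); split=> //; first exact: iota_nz.
  by rewrite -iota_sinv -Hmul; exact: iota_leM.
Qed.

Lemma Ig g : incl (Eg phi1 g) (Eg phi g) iota.
Proof.
split=> //; [exact: semil_Eg | exact: semil_Eg|].
move=> x C Px Hc.
have Hc1 : fcover (@Eset S1) x C.
  by have := Eg_cov Px Hc; rewrite map_id.
have [H1 H2] := Hcov (Eg_idem Px) Hc1.
split.
  move=> c /lin_map [c' [Hc' <-]]; split; last by case: (H1 (iota c')) => //; apply/lin_map; exists c'.
  apply: Eg_iota; exact: (Hc.1 c' Hc').1.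
move=> y Py ny yx; apply: H2 => //; exact: Eg_idem Py.
Qed.

Lemma Iid_pres g U : Iid phi1 g U -> Iid phi g (Tmap (@Eset S1) (@Eset S2) iota U).
Proof.
move=> [U' [HU' ->]].
exists (Tmap (Eg phi1 g) (Eg phi g) iota U'); split.
  have HH := Tmap_Tc (Ig g) HU'. exact HH.
have Heq : forall xi : set S2, [set x | Eg phi1 g x /\ [set y | @Eset S1 y /\ xi (iota y)] x] =
    [set x | Eg phi1 g x /\ [set y | Eg phi g y /\ xi y] (iota x)].
  move=> xi; apply/seteqP; split=> x [Hx [_ H]]; split=> //; split=> //.
    exact: Eg_iota.
  exact: Eg_idem Hx.
apply/seteqP; split.
- move=> xi [Txi Hex [Teta [x [Hx [_ xix]]] HU'x]]; split=> //.
    by exists (iota x); split=> //; exact: Eg_iota.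
  split.
  + apply: (restr_tight (incl_Eg phi g) Txi); exists (iota x); split=> //; exact: Eg_iota.
  + by exists x; split=> //; split=> //; exact: Eg_iota.
  + by rewrite -Heq.
- move=> xi [Txi Hex [Teta [x [Hx [_ xix]]] HU'x]]; split=> //.
    by exists x; split=> //; exact: Eg_idem Hx.
  split.
  + apply: (restr_tight I12 Txi); exists x; split=> //; exact: Eg_idem Hx.
  + by exists x; split=> //; split=> //; exact: Eg_idem Hx.
  + by rewrite Heq.
Qed.


Lemma compat1 g V :
  (forall zeta, V zeta -> Tight (@Eset S1) zeta /\ exists x, Eg phi1 (ginv g) x /\ zeta x) ->
  Tmap (@Eset S1) (@Eset S2) iota (psi phi1 g V) `<=` psi phi g (Tmap (@Eset S1) (@Eset S2) iota V).
Proof.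
move=> HV xi [Txi [x1 [Ex1 xix1]] Hpsi].
case: Hpsi => Teta [a [Ega eta_a]] [eta0 [zeta [Vzeta ->]] Heq].
have : phimg phi1 g (zeta `&` Eg phi1 (ginv g)) a by rewrite Heq.
move=> [x [s [[zx Egx] ns gs xs Ea]]].
have zetaF : is_filter (@Eset S1) zeta := (HV _ Vzeta).1.1.
have Hx : idem x by apply: (filter_sub zetaF).
have xi_a : xi (iota (s ⊙ x ⊙ sinv s)) by rewrite -Ea; exact: eta_a.2.
rewrite iota_conj in xi_a.
set t := iota s in xi_a.
have xit : xi (t ⊙ sinv t) := filter_up Txi.1 xi_a (ssinv_idem t) (conj_le t (iota_idem Hx)).
have nt : t <> szero := iota_nz ns.
have gt : phi t = g := gs.
set zeta' := transp xi t.
have Tz' : Tight (@Eset S2) zeta' := transp_tight Txi xit.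
have Hb : [set y | @Eset S1 y /\ zeta' (iota y)] = zeta.
  apply/seteqP; split.
  - move=> y [Ey z'y].
    have := transp_back Txi.1 z'y; rewrite -iota_conj => xiy.
    have : [set x | Eg phi1 g x /\ [set x | @Eset S1 x /\ xi (iota x)] x] (s ⊙ y ⊙ sinv s).
      split; first exact: Eg_conj ns gs Ey.
      by split=> //; exact: conj_idem.
    rewrite -Heq => [[x' [r [[zx' Egx'] nr gr x'r E]]]].
    have Hx' : idem x' by apply: (filter_sub zetaF).
    pose w := x ⊙ x'.
    have Hw : idem w := idem_mul Hx Hx'.
    have zw : zeta w := filter_meet zetaF zx zx'.
    have ws : leS w (sinv s ⊙ s) := leS_trans (leS_mull Hx Hx') xs.
    have wr : leS w (sinv r ⊙ r) := leS_trans (leS_mulr x Hx') x'r.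
    have Hsr : phi1 s = phi1 r by rewrite gs gr.
    have HWD := WD phi1_pure Hsr Hw ws wr.
    have Hconj : s ⊙ w ⊙ sinv s = r ⊙ w ⊙ sinv r by rewrite !(conjE _ Hw) HWD.
    have le1 : leS (s ⊙ w ⊙ sinv s) (s ⊙ y ⊙ sinv s).
      rewrite Hconj E; exact: conj_mono Hw Hx' (leS_mulr x Hx').
    have le2 := conj_mono (sinv s) (conj_idem s Hw) (conj_idem s Ey) le1.
    rewrite sinvK !conj_back // in le2.
    rewrite (idem_comm (sinvs_idem s) Hw) in le2.
    have ws' : w ⊙ (sinv s ⊙ s) = w := ws.
    rewrite ws' in le2.
    apply: (filter_up zetaF zw Ey).
    exact: leS_trans le2 (le_back s Ey).
  - move=> y zy; have Ey : idem y by apply: (filter_sub zetaF).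
    split=> //; split; first exact: iota_idem.
    exists (iota (s ⊙ (y ⊙ x) ⊙ sinv s)); split.
    + have : [set x | Eg phi1 g x /\ [set x | @Eset S1 x /\ xi (iota x)] x] (s ⊙ (y ⊙ x) ⊙ sinv s).
        rewrite -Heq; exists (y ⊙ x), s; split=> //.
          split; first exact: filter_meet zetaF zy zx.
          exact: Eg_ideal Egx (idem_mul Ey Hx) (leS_mulr y Hx).
        exact: leS_trans (leS_mulr y Hx) xs.
      by move=> [_ [_ ?]].
    + rewrite iota_conj; exact: conj_le (iota_idem (idem_mul Ey Hx)).
    + rewrite iota_conj conj_back; last exact: iota_idem (idem_mul Ey Hx).
      apply: leS_trans (le_back _ (iota_idem (idem_mul Ey Hx))) _.
      apply: iota_leM; exact: leS_mull Ey Hx.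
have Heq2 : phimg phi g (zeta' `&` Eg phi (ginv g)) = [set x | Eg phi g x /\ xi x].
  apply/seteqP; split.
  - move=> y [x'' [q [[z'x'' Egx''] nq gq x''q ->]]].
    have Hx'' : idem x'' := z'x''.1.
    split; first exact: Eg_conj nq gq Hx''.
    have z'x''c := z'x''.
    case: z'x'' => _ [z0 [xiz0 z0t z0x]].
    have Hz0 : idem z0 by apply: (filter_sub Txi.1).
    pose v := sinv t ⊙ z0 ⊙ t.
    have Hv : idem v by have := conj_idem (sinv t) Hz0; rewrite sinvK.
    have vt : leS v (sinv t ⊙ t) by have := conj_le (sinv t) Hz0; rewrite sinvK.
    pose w := v ⊙ x''.
    have Hw : idem w := idem_mul Hv Hx''.
    have wq : leS w (sinv q ⊙ q) := leS_trans (leS_mulr v Hx'') x''q.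
    have wt : leS w (sinv t ⊙ t) := leS_trans (leS_mull Hv Hx'') vt.
    have HWD := WD Hphi (etrans gq (esym gt)) Hw wq wt.
    have le1 : leS (t ⊙ w ⊙ sinv t) (q ⊙ x'' ⊙ sinv q).
      rewrite (conjE t Hw) -HWD -(conjE q Hw); exact: conj_mono Hw Hx'' (leS_mulr v Hx'').
    have xitw : xi (t ⊙ w ⊙ sinv t).
      rewrite /w -conj_mulE // /v conj_cancel //.
      exact: filter_meet Txi.1 xiz0 (transp_back Txi.1 z'x''c).
    exact: filter_up Txi.1 xitw (conj_idem q Hx'') le1.
  - move=> y [Egy xiy].
    have ny : y <> szero := filter_ne0 Txi.1 xiy.
    have [q [nq gq yq]] := Eg_nz Egy ny.
    have Hy := Eg_idem Egy.
    exists (sinv q ⊙ y ⊙ q), q; split=> //.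
    + split.
      * split; first by have := conj_idem (sinv q) Hy; rewrite sinvK.
        exists (y ⊙ (t ⊙ sinv t)); split.
        -- exact: filter_meet Txi.1 xiy xit.
        -- have HH := leS_mulr y (ssinv_idem t). exact HH.
        -- pose w := y ⊙ (t ⊙ sinv t).
           have Hw : idem w := idem_mul Hy (ssinv_idem t).
           have Hg : phi (sinv q) = phi (sinv t) by rewrite !grade_inv // gq gt.
           have wq : leS w (sinv (sinv q) ⊙ sinv q).
             by rewrite sinvK; exact: leS_trans (leS_mull Hy (ssinv_idem t)) yq.
           have wt : leS w (sinv (sinv t) ⊙ sinv t).
             by rewrite sinvK; exact (leS_mulr y (ssinv_idem t)).
           have HWD := WD Hphi Hg Hw wq wt.
           have E1 : sinv t ⊙ w ⊙ t = sinv t ⊙ w ⊙ sinv (sinv t) by rewrite sinvK.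
           rewrite -/w E1 (conjE (sinv t) Hw) -HWD -(conjE (sinv q) Hw).
           have := conj_mono (sinv q) Hw Hy (leS_mull Hy (ssinv_idem t)); by rewrite sinvK.
      * have := Eg_conj (nz_sinv nq) (etrans (grade_inv Hphi nq) (f_equal ginv gq)) Hy.
        by rewrite sinvK.
    + by have := conj_le (sinv q) Hy; rewrite sinvK.
    + by rewrite conj_cancel.
split=> //.
  exists (iota (s ⊙ x ⊙ sinv s)); split.
    exact: Eg_iota (Eg_conj ns gs Hx).
  by rewrite iota_conj.
exists (zeta' `&` Eg phi (ginv g)) => //.
exists zeta'; split=> //.
split=> //.
  by exists x; have : [set y | @Eset S1 y /\ zeta' (iota y)] x by rewrite Hb.
by rewrite Hb.
Qed.


Lemma compat2 g V :
  (forall zeta, V zeta -> Tight (@Eset S1) zeta /\ exists x, Eg phi1 (ginv g) x /\ zeta x) ->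
  psi phi g (Tmap (@Eset S1) (@Eset S2) iota V) `<=` Tmap (@Eset S1) (@Eset S2) iota (psi phi1 g V).
Proof.
move=> HV xi [Txi [b [Egb xib]] [eta0 [zeta' [[Tz' Hmz' Vz] ->]] Heq]].
set zeta := [set x | @Eset S1 x /\ zeta' (iota x)] in Vz.
have [Tz [x0 [Egx0 zx0]]] := HV _ Vz.
have zetaF := Tz.1.
have nx0 : x0 <> szero := filter_ne0 zetaF zx0.
have [r [nr gr x0r]] := Eg_nz Egx0 nx0.
pose s := sinv r.
have ns : s <> szero := nz_sinv nr.
have gs : phi1 s = g by rewrite /s (grade_inv phi1_pure nr) gr ginvK.
have x0s : leS x0 (sinv s ⊙ s) by rewrite /s sinvK.
have Hx0 : idem x0 by apply: (filter_sub zetaF).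
have K : forall x r', zeta x -> Eg phi1 (ginv g) x -> r' <> szero -> phi1 r' = g ->
    leS x (sinv r' ⊙ r') -> xi (iota (r' ⊙ x ⊙ sinv r')).
  move=> x r' zx Egx nr' gr' xr'.
  have : [set x | Eg phi g x /\ xi x] (iota (r' ⊙ x ⊙ sinv r')).
    rewrite -Heq iota_conj; exists (iota x), (iota r'); split => //.
    - by split; [exact: zx.2 | exact: Eg_iota].
    - exact: iota_nz.
    - by rewrite -iota_sinv -Hmul; exact: iota_leM.
  by case.
pose a := s ⊙ x0 ⊙ sinv s.
have xia : xi (iota a) := K _ _ zx0 Egx0 ns gs x0s.
have Ha : idem a := conj_idem s Hx0.
have Hex : exists x, @Eset S1 x /\ xi (iota x) by exists a.
split=> //.
split.
- have HH := restr_tight I12 Txi Hex; exact HH.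
- by exists a; split; [exact: Eg_conj ns gs Hx0 | split].
exists (zeta `&` Eg phi1 (ginv g)); first by exists zeta.
apply/seteqP; split.
- move=> y [x' [r' [[zx' Egx'] nr' gr' x'r' ->]]].
  have Hx' : idem x' by apply: (filter_sub zetaF).
  split; first exact: Eg_conj nr' gr' Hx'.
  split; first exact: conj_idem.
  exact: K.
- move=> y [Egy [Ey xiy]].
  have ny : y <> szero.
    by move=> y0; apply: (filter_no0 Txi.1); rewrite -Hzero -y0.
  have [r' [nr' gr' yr']] := Eg_nz Egy ny.
  exists (sinv r' ⊙ y ⊙ r'), r'; split=> //.
  + split.
    * split; first by have := conj_idem (sinv r') Ey; rewrite sinvK.
      have : [set x | Eg phi g x /\ xi x] (iota y) by split=> //; exact: Eg_iota.
      rewrite -Heq => [[x'' [q [[z'x'' _] nq gq x''q Ey']]]].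
      have Hx'' : idem x'' by apply: (filter_sub Tz'.1).
      pose u := iota r'.
      pose w := iota y.
      have Hw : idem w := iota_idem Ey.
      have nu : u <> szero := iota_nz nr'.
      have Hg : phi (sinv q) = phi (sinv u) by rewrite (grade_inv Hphi nq) (grade_inv Hphi nu) gq; exact: (f_equal ginv (esym gr')).
      have wq : leS w (sinv (sinv q) ⊙ sinv q) by rewrite sinvK /w Ey'; exact: conj_le.
      have wu : leS w (sinv (sinv u) ⊙ sinv u).
        by rewrite sinvK /u -iota_sinv -Hmul; exact: iota_leM.
      have HWD := WD Hphi Hg Hw wq wu.
      have -> : iota (sinv r' ⊙ y ⊙ r') = sinv u ⊙ w ⊙ sinv (sinv u) by rewrite !Hmul iota_sinv sinvK.
      rewrite (conjE (sinv u) Hw) -HWD -(conjE (sinv q) Hw) sinvK /w Ey' conj_back //.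
      have x''q' : x'' ⊙ (sinv q ⊙ q) = x'' := x''q.
      by rewrite (idem_comm (sinvs_idem q) Hx'') x''q'.
    * have := Eg_conj (nz_sinv nr') (etrans (grade_inv phi1_pure nr') (f_equal ginv gr')) Ey.
      by rewrite sinvK.
  + by have := conj_le (sinv r') Ey; rewrite sinvK.
  + by rewrite conj_cancel.
Qed.

Lemma compat g V :
  (forall zeta, V zeta -> Tight (@Eset S1) zeta /\ exists x, Eg phi1 (ginv g) x /\ zeta x) ->
  Tmap (@Eset S1) (@Eset S2) iota (psi phi1 g V) = psi phi g (Tmap (@Eset S1) (@Eset S2) iota V).
Proof. by move=> HV; apply/seteqP; split; [exact: compat1 | exact: compat2]. Qed.

End Main.

Local Open Scope ring_scope.
Import GRing.Theory.

Section Alg.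
Variables (S1 S2 : InvSemigroup) (iota : S1 -> S2) (R : comPzRingType).

Definition condT (xi : set S2) := Tight (@Eset S2) xi /\ exists x, @Eset S1 x /\ xi (iota x).
Definition rst (xi : set S2) : set S1 := [set x | @Eset S1 x /\ xi (iota x)].
Definition theta (c : set S1 -> R) : set S2 -> R :=
  fun xi => if `[< condT xi >] then c (rst xi) else 0.

Lemma Tmap_cond U xi : Tmap (@Eset S1) (@Eset S2) iota U xi <-> condT xi /\ U (rst xi).
Proof. by split=> [[H1 H2 H3]|[[H1 H2] H3]]. Qed.

Lemma theta_pre c (r : R) : r != 0 ->
  (theta c) @^-1` [set r] = Tmap (@Eset S1) (@Eset S2) iota (c @^-1` [set r]).
Proof.
move=> nr; apply/seteqP; split=> xi.
- rewrite /theta /=; case: (pselect (condT xi)) => [Hc|Hc].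
    by rewrite (asboolT Hc) => Hr; apply/Tmap_cond.
  by rewrite (asboolF Hc) => H0; rewrite -H0 eqxx in nr.
- move=> /Tmap_cond [Hc Hr]; by rewrite /= /theta (asboolT Hc).
Qed.

Lemma theta0 : theta (fun=> 0) = (fun=> 0).
Proof. by apply: funext => xi; rewrite /theta; case: ifP. Qed.

Lemma thetaD c d : theta (fun xi => c xi + d xi) = (fun xi => theta c xi + theta d xi).
Proof. by apply: funext => xi; rewrite /theta; case: ifP => _ //; rewrite addr0. Qed.

Lemma thetaM c d : theta (fun xi => c xi * d xi) = (fun xi => theta c xi * theta d xi).
Proof. by apply: funext => xi; rewrite /theta; case: ifP => _ //; rewrite mulr0. Qed.

Lemma thetaZ (r : R) c : theta (fun xi => r * c xi) = (fun xi => r * theta c xi).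
Proof. by apply: funext => xi; rewrite /theta; case: ifP => _ //; rewrite mulr0. Qed.

End Alg.

Lemma Iid_Tc (G : Grp) (S : InvSemigroup) (phi : S -> G) g U :
  Iid phi g U -> Tc (@Eset S) U.
Proof. by move=> [U' [HU' ->]]; exact: (Tmap_Tc (incl_Eg phi g) HU'). Qed.

Lemma Iid_mem (G : Grp) (S : InvSemigroup) (phi : S -> G) g U zeta :
  Iid phi g U -> U zeta -> Tight (@Eset S) zeta /\ exists x, Eg phi g x /\ zeta x.
Proof. by move=> [U' [HU' ->]] [H1 H2 H3]. Qed.

Lemma theta_psit (G : Grp) (S1 S2 : InvSemigroup) (phi : S2 -> G) (iota : S1 -> S2) (R : comPzRingType)
  (Hphi : pure_grading phi) (Hinj : injective iota) (Hzero : iota szero = szero)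
  (Hmul : forall a b, iota (smul a b) = smul (iota a) (iota b))
  (Hcov : preserves_fcovers (@Eset S1) (@Eset S2) iota) g (h : set S1 -> R) :
  (forall zeta, h zeta != 0 -> Tight (@Eset S1) zeta /\
      exists x, Eg (fun s => phi (iota s)) (ginv g) x /\ zeta x) ->
  theta iota (psit (fun s => phi (iota s)) g h) = psit phi g (theta iota h).
Proof.
move=> Hh; apply: funext => xi; rewrite /psit.
have E : [set r | r != 0 /\ psi phi g ((theta iota h) @^-1` [set r]) xi] =
    [set r | r != 0 /\ Tmap (@Eset S1) (@Eset S2) iota (psi (fun s => phi (iota s)) g (h @^-1` [set r])) xi].
  have HV : forall r : R, r != 0 -> forall zeta, (h @^-1` [set r]) zeta ->
      Tight (@Eset S1) zeta /\ exists x, Eg (fun s => phi (iota s)) (ginv g) x /\ zeta x.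
    by move=> r nr zeta /= hz; apply: Hh; rewrite hz.
  apply/seteqP; split=> r [nr H]; split=> //.
    by rewrite (compat Hphi Hinj Hzero Hmul Hcov (HV r nr)) -theta_pre.
  by rewrite (compat Hphi Hinj Hzero Hmul Hcov (HV r nr)) -theta_pre in H.
rewrite E /theta; case: (pselect (condT iota xi)) => [Hc|Hc].
  rewrite (asboolT Hc); congr (xget 0); apply/seteqP; split=> r [nr H]; split=> //.
    by apply/Tmap_cond; split.
  by move/Tmap_cond: H => [].
rewrite (asboolF Hc) xgetPN // => r [_ /Tmap_cond [Hc' _]]; exact: Hc Hc'.
Qed.

Unset Implicit Arguments.
Theorem mainTheorem18 (G : Grp) (S1 S2 : InvSemigroup) (phi : S2 -> G)
  (iota : S1 -> S2)
  (Hphi : pure_grading phi)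
  (Hinj : injective iota)
  (Hzero : iota szero = szero)
  (Hmul : forall a b, iota (smul a b) = smul (iota a) (iota b))
  (Hcov : preserves_fcovers (@Eset S1) (@Eset S2) iota) :
  let phi1 : S1 -> G := fun s => phi (iota s) in
  let f := Tmap (@Eset S1) (@Eset S2) iota in
  (* f is an injective morphism of partial actions (T_c(E1),Phi1) -> (T_c(E2),Phi2) *)
  ((forall U, Tc (@Eset S1) U -> Tc (@Eset S2) (f U)) /\
   f set0 = set0 /\
   (forall U V, Tc (@Eset S1) U -> Tc (@Eset S1) V ->
      [/\ f (U `|` V) = f U `|` f V, f (U `&` V) = f U `&` f V &
          f (U `\` V) = f U `\` f V]) /\
   (forall U V, Tc (@Eset S1) U -> Tc (@Eset S1) V -> f U = f V -> U = V) /\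
   (forall g : G, forall U, Iid phi1 g U -> Iid phi g (f U)) /\
   (forall g : G, forall U, Iid phi1 (ginv g) U -> f (psi phi1 g U) = psi phi g (f U))) /\
  (* the induced injective G-graded R-algebra homomorphism L_R(S1) -> L_R(S2) *)
  (forall R : comPzRingType,
   exists Theta : (G -> set S1 -> R) -> (G -> set S2 -> R),
   (forall a, LR phi1 a -> LR phi (Theta a)) /\
       (forall a b, LR phi1 a -> LR phi1 b ->
          Theta (LRadd a b) = LRadd (Theta a) (Theta b)) /\
       (forall (r : R) a, LR phi1 a -> Theta (LRscale r a) = LRscale r (Theta a)) /\
       (forall (g : G) a, LcR (Iid phi1 g) a ->
          exists b, LcR (Iid phi g) b /\ Theta (homog g a) = homog g b) /\
       (forall (s t : G) a b a' b', LcR (Iid phi1 s) a -> LcR (Iid phi1 t) b ->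
          Theta (homog s a) = homog s a' -> Theta (homog t b) = homog t b' ->
          Theta (homog (gmul s t) (homprod phi1 s a b)) = homog (gmul s t) (homprod phi s a' b')) /\
       (forall a b, LR phi1 a -> LR phi1 b -> Theta a = Theta b -> a = b) /\
       (forall (g : G) (x : S1), Eg phi1 g x ->
          Theta (xdelta R g x) = xdelta R g (iota x))).


Proof.
move=> phi1 f.
have I := I12 Hinj Hzero Hmul Hcov.
have fTmap : forall U xi, f U xi <-> condT iota xi /\ U (rst iota xi) by move=> U xi; exact: Tmap_cond.
have finj : forall U V, Tc (@Eset S1) U -> Tc (@Eset S1) V -> f U = f V -> U = V.
  move=> U V HU HV E; apply/seteqP; split.
    by apply: (Tmap_sub I HU HV); move: E; rewrite /f => ->.
  by apply: (Tmap_sub I HV HU); move: E; rewrite /f => ->.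
split.
  split; first by move=> U HU; exact: (Tmap_Tc I HU).
  split.
    by apply/seteqP; split=> // xi /fTmap [_ []].
  split.
    move=> U V _ _; split; apply/seteqP; split.
    - by move=> xi /fTmap [Hc [HU|HV]]; [left|right]; apply/fTmap.
    - by move=> xi [/fTmap [Hc HU]|/fTmap [Hc HV]]; apply/fTmap; split=> //; [left|right].
    - by move=> xi /fTmap [Hc [HU HV]]; split; apply/fTmap.
    - by move=> xi [/fTmap [Hc HU] /fTmap [_ HV]]; apply/fTmap.
    - move=> xi /fTmap [Hc [HU HV]]; split; first by apply/fTmap.
      by move=> /fTmap [_ HV']; exact: HV HV'.
    - move=> xi [/fTmap [Hc HU] HV]; apply/fTmap; split=> //; split=> //.
      by move=> HV'; apply: HV; apply/fTmap.
  split; first exact: finj.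
  split.
    by move=> g U HU; exact: (Iid_pres Hinj Hzero Hmul Hcov HU).
  move=> g U HU; apply: (compat Hphi Hinj Hzero Hmul Hcov).
  move=> zeta Uz; exact: (Iid_mem HU Uz).
move=> R.
pose th := theta (R := R) iota.
exists (fun a g => th (a g)).
have thLc : forall (g : G) (c : set S1 -> R), LcR (Iid phi1 g) c -> LcR (Iid phi g) (th c).
  move=> g c [[l Hl] Hpre]; split.
    exists (0 :: l) => xi; rewrite /th /theta; case: ifP => _; rewrite inE ?eqxx //.
    by rewrite Hl orbT.
  move=> r nr; rewrite /th theta_pre //; exact: (Iid_pres Hinj Hzero Hmul Hcov (Hpre r nr)).
have thhom : forall (g : G) (c : set S1 -> R), (fun t => th (homog g c t)) = homog g (th c).
  move=> g c; apply: funext => t; rewrite /homog; case: ifP => _ //.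
  exact: theta0.
split.
  move=> a [[l Hl] Ha]; split.
    by exists l => g ng; rewrite Hl //; exact: theta0.
  by move=> g; apply: thLc.
split.
  by move=> a b _ _; apply: funext => g; rewrite /LRadd; exact: (thetaD iota (a g) (b g)).
split.
  by move=> r a _; apply: funext => g; rewrite /LRscale; exact: (thetaZ iota r (a g)).
split.
  by move=> g a Ha; exists (th a); split; [exact: thLc | exact: thhom].
split.
  move=> s t a b a' b' Ha Hb Ea Eb.
  have -> : a' = th a by have := f_equal (fun F => F s) Ea; rewrite /= /homog (asboolT (erefl s)) => ->.
  have -> : b' = th b by have := f_equal (fun F => F t) Eb; rewrite /= /homog (asboolT (erefl t)) => ->.
  rewrite thhom; congr homog.
  rewrite /homprod /th.
  rewrite (theta_psit Hphi Hinj Hzero Hmul Hcov).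
    rewrite thetaM (theta_psit Hphi Hinj Hzero Hmul Hcov) //.
    move=> zeta nz; have [_ Hpre] := Ha.
    have := Iid_mem (Hpre _ nz) (erefl (a zeta)); by rewrite ginvK.
  move=> zeta; rewrite /psit.
  case: xgetP => [r _ [nr [Tz Hex _]] _|_]; first by split.
  by rewrite mul0r eqxx.
split.
  move=> a b [_ Ha] [_ Hb] E; apply: funext => g.
  have Eg' := f_equal (fun F => F g) E.
  have Hc : forall r : R, r != 0 -> a g @^-1` [set r] = b g @^-1` [set r].
    move=> r nr; apply: finj.
    - exact: (Iid_Tc ((Ha g).2 r nr)).
    - exact: (Iid_Tc ((Hb g).2 r nr)).
    - by rewrite /f -!theta_pre // -/th Eg'.
  apply: funext => eta.
  case: (eqVneq (a g eta) 0) => [a0|an0].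
    case: (eqVneq (b g eta) 0) => [b0|bn0]; first by rewrite a0 b0.
    have : (b g @^-1` [set b g eta]) eta by [].
    by rewrite -Hc // /= => ->.
  have : (a g @^-1` [set a g eta]) eta by [].
  by rewrite Hc // /= => ->.
move=> g x Egx; rewrite /xdelta thhom; congr homog.
apply: funext => xi; rewrite /th /theta /indic.
have Ex : @Eset S1 x := Eg_idem Egx.
case: (pselect (condT iota xi)) => [Hc|Hc].
  rewrite (asboolT Hc).
  case: (pselect (Vset (@Eset S2) (iota x) [::] xi)) => [HV|HV].
    rewrite (asboolT HV) asboolT //; split; first exact: (restr_tight I Hc.1 Hc.2).
    split; first by split=> //; exact: HV.2.1.
    by move=> y [].
  rewrite (asboolF HV) asboolF // => -[_ [[_ xix] _]]; apply: HV.
  by split; first exact: Hc.1; split=> // y [].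
rewrite (asboolF Hc); case: (pselect (Vset (@Eset S2) (iota x) [::] xi)) => [HV|HV].
  by exfalso; apply: Hc; split; [exact: HV.1 | exists x; split=> //; exact: HV.2.1].
by rewrite (asboolF HV).
Qed.
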